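(* Let $(X,\mu)$ be a discrete-time BRW and $A\subseteq X$ nonempty. The following are equivalent: (1) $q(x,A)=\bar q(x)$ for all $x\in X$; (2) $q_0(x,A)\le\bar q(x)$ for all $x\in X$; (3) for every $x\in X$, either $\bar q(x)=1$ or, conditioned on global survival starting from one particle at $x$, local survival in $A$ occurs with probability $1$.
   Context: $S_X:=\{f:X\to\mathbb N:\sum_yf(y)<\infty\}$; a discrete-time BRW $(X,\mu)$: probability measures $\mu_x$ on $S_X$, each particle at $x$ independently replaced by $f(y)$ particles at each $y$, $f\sim\mu_x$; $\eta_n(y)$ is the number of particles at $y$ in generation $n$. For $n\ge0$, $q_n(x,A)$ is the probability, starting with one particle at $x$, that $\eta_k(y)=0$ for all $k\ge n+1$ and all $y\in A$; $q(x,A):=\lim_nq_n(x,A)$ is the probability of local extinction in $A$, $\bar q(x):=q(x,X)$. Local survival in $A$ is the complement of local extinction in $A$; global survival is the event that particles exist at every generation. *)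

(* Defs.v *)
From Stdlib Require Import Reals ClassicalEpsilon List.
Set Implicit Arguments.
Open Scope R_scope.

Definition ind (P : Prop) : R := if excluded_middle_informative P then 1 else 0.

Fixpoint lsum {T : Type} (f : T -> R) (l : list T) : R :=
  match l with nil => 0 | t :: l' => f t + lsum f l' end.

Definition psums {T : Type} (f : T -> R) (r : R) : Prop :=
  exists l : list T, NoDup l /\ r = lsum f l.

Lemma psums_ne {T : Type} (f : T -> R) : exists r, psums f r.
Proof. exists 0, nil. split; [constructor | reflexivity]. Qed.

(** Sum over the whole type [T] of a (nonnegative) function: the supremum of the
    finite partial sums (set to 0 if unbounded; only used on bounded sums). *)
Definition sumR {T : Type} (f : T -> R) : R :=
  match excluded_middle_informative (bound (psums f)) with
  | left Hb => proj1_sig (completeness (psums f) Hb (psums_ne f))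
  | right _ => 0
  end.

(** Elements of S_X are functions X -> nat with finite support. *)
Definition fin_supp {X : Type} (f : X -> nat) : Prop :=
  exists l : list X, forall y, f y <> 0%nat -> In y l.

Fixpoint cfg {X : Type} (l : list X) : X -> nat :=
  match l with
  | nil => fun _ => 0%nat
  | x :: l' => fun y => ((if excluded_middle_informative (x = y) then 1 else 0) + cfg l' y)%nat
  end.

(** Convolution (law of the sum of two independent S_X-valued variables). *)
Definition conv {X : Type} (m1 m2 : (X -> nat) -> R) (h : X -> nat) : R :=
  sumR (fun p : (X -> nat) * (X -> nat) =>
          ind (forall y, (fst p y + snd p y)%nat = h y) * (m1 (fst p) * m2 (snd p))).

(** Law of the offspring configuration of the particles listed in [l]
    (each particle at x reproduces independently according to mu x). *)
Fixpoint offl {X : Type} (mu : X -> (X -> nat) -> R) (l : list X) : (X -> nat) -> R :=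
  match l with
  | nil => fun h => ind (forall y, h y = 0%nat)
  | x :: l' => conv (mu x) (offl mu l')
  end.

Definition is_BRW {X : Type} (mu : X -> (X -> nat) -> R) : Prop :=
  forall x, (forall f, 0 <= mu x f) /\ (forall f, mu x f <> 0 -> fin_supp f)
            /\ sumR (mu x) = 1.

(** A realization, on some probability space, of the BRW (X,mu) started with one
    particle at x: eta n w y = number of particles at y in generation n. *)
Record BRW_realization {X : Type} (mu : X -> (X -> nat) -> R) (x : X) : Type := {
  rOm : Type;
  rF : (rOm -> Prop) -> Prop;
  rP : (rOm -> Prop) -> R;
  reta : nat -> rOm -> X -> nat;
  F_full : rF (fun _ => True);
  F_compl : forall E, rF E -> rF (fun w => ~ E w);
  F_union : forall E : nat -> rOm -> Prop, (forall n, rF (E n)) -> rF (fun w => exists n, E n w);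
  P_nonneg : forall E, rF E -> 0 <= rP E;
  P_full : rP (fun _ => True) = 1;
  P_sigma : forall E : nat -> rOm -> Prop, (forall n, rF (E n)) ->
      (forall n m w, n <> m -> E n w -> E m w -> False) ->
      Un_cv (fun N => sum_f_R0 (fun k => rP (E k)) N) (rP (fun w => exists n, E n w));
  eta_meas : forall n y k, rF (fun w => reta n w y = k);
  eta_init : rP (fun w => reta 0 w = cfg (x :: nil)) = 1;
  eta_markov : forall (n : nat) (hs : nat -> X -> nat) (l : list X) (h' : X -> nat),
      cfg l = hs n ->
      rP (fun w => (forall k, (k <= n)%nat -> reta k w = hs k) /\ reta (S n) w = h')
      = rP (fun w => forall k, (k <= n)%nat -> reta k w = hs k) * offl mu l h'
}.

Section Q.
Context {X : Type} {mu : X -> (X -> nat) -> R} {x : X} (Z : BRW_realization mu x).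

Definition qn (A : X -> Prop) (n : nat) : R :=
  rP Z (fun w => forall k y, (n < k)%nat -> A y -> reta Z k w y = 0%nat).

Definition loc_ext (A : X -> Prop) (w : rOm Z) : Prop :=
  exists n, forall k y, (n < k)%nat -> A y -> reta Z k w y = 0%nat.

(** q(x,A) = probability of local extinction in A (= lim_n q_n(x,A)). *)
Definition q (A : X -> Prop) : R := rP Z (loc_ext A).

Definition qbar : R := q (fun _ => True).

Definition glob_surv (w : rOm Z) : Prop := forall n, exists y, reta Z n w y <> 0%nat.

Definition cond_prob (E B : rOm Z -> Prop) : R := rP Z (fun w => E w /\ B w) / rP Z B.
End Q.

(* Main.v *)
From Stdlib Require Import Reals Lra Lia List Permutation ClassicalEpsilon
  FunctionalExtensionality PropExtensionality Classical Cantor.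
Require Import Defs.
Open Scope R_scope.


Lemma pred_ext {T : Type} (E E' : T -> Prop) : (forall w, E w <-> E' w) -> E = E'.
Proof. intro H; apply functional_extensionality; intro w; apply propositional_extensionality; auto. Qed.

Lemma ind_true (P : Prop) : P -> ind P = 1.
Proof. intro H; unfold ind; destruct excluded_middle_informative; tauto. Qed.
Lemma ind_false (P : Prop) : ~ P -> ind P = 0.
Proof. intro H; unfold ind; destruct excluded_middle_informative; tauto. Qed.
Lemma ind_ext (P Q : Prop) : (P <-> Q) -> ind P = ind Q.
Proof. intro H; unfold ind; do 2 destruct excluded_middle_informative; tauto. Qed.
Lemma ind_01 (P : Prop) : 0 <= ind P <= 1.
Proof. unfold ind; destruct excluded_middle_informative; lra. Qed.

Lemma lsum_app {T} (f : T -> R) l1 l2 : lsum f (l1 ++ l2) = lsum f l1 + lsum f l2.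
Proof. induction l1; simpl; lra. Qed.

Lemma lsum_nonneg {T} (f : T -> R) l : (forall t, 0 <= f t) -> 0 <= lsum f l.
Proof. intro H; induction l; simpl; [lra | specialize (H a); lra]. Qed.

Lemma lsum_le {T} (f g : T -> R) l : (forall t, In t l -> f t <= g t) -> lsum f l <= lsum g l.
Proof. induction l; simpl; intros H; [lra|].
  assert (f a <= g a) by auto. assert (lsum f l <= lsum g l) by (apply IHl; auto). lra. Qed.

Lemma lsum_ext {T} (f g : T -> R) l : (forall t, In t l -> f t = g t) -> lsum f l = lsum g l.
Proof. induction l; simpl; intros H; [lra|]. rewrite H, IHl; auto. Qed.

Lemma lsum_zero {T} (f : T -> R) l : (forall t, In t l -> f t = 0) -> lsum f l = 0.
Proof. intro H; rewrite (lsum_ext f (fun _ => 0) l H). clear H; induction l; simpl; lra. Qed.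

Lemma lsum_scal {T} (f : T -> R) c l : lsum (fun t => c * f t) l = c * lsum f l.
Proof. induction l; simpl; [lra|rewrite IHl; lra]. Qed.

Lemma lsum_perm {T} (f : T -> R) l l' : Permutation l l' -> lsum f l = lsum f l'.
Proof. induction 1; simpl; lra. Qed.

Lemma lsum_incl {T} (f : T -> R) (l1 l2 : list T) : (forall t, 0 <= f t) ->
  NoDup l1 -> incl l1 l2 -> lsum f l1 <= lsum f l2.
Proof.
  intros Hf Hn; revert l2; induction Hn as [|a l1 Ha Hn IH]; intros l2 Hi; simpl.
  - apply lsum_nonneg; auto.
  - assert (Hin : In a l2) by (apply Hi; left; auto).
    destruct (in_split _ _ Hin) as [L1 [L2 ->]].
    rewrite (lsum_perm f _ _ (Permutation_sym (Permutation_middle L1 L2 a))). simpl.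
    assert (lsum f l1 <= lsum f (L1 ++ L2)); [|lra].
    apply IH. intros t Ht. assert (In t (L1 ++ a :: L2)) by (apply Hi; right; auto).
    apply in_app_or in H. apply in_or_app. destruct H as [H|[H|H]]; auto.
    subst; contradiction.
Qed.

Fixpoint cfilter {T} (P : T -> Prop) (l : list T) : list T :=
  match l with nil => nil
  | t :: l' => if excluded_middle_informative (P t) then t :: cfilter P l' else cfilter P l' end.

Lemma cfilter_In {T} (P : T -> Prop) l t : In t (cfilter P l) <-> In t l /\ P t.
Proof. induction l; simpl; [tauto|].
  destruct excluded_middle_informative; simpl; rewrite IHl; split; intuition; subst; tauto. Qed.

Lemma cfilter_NoDup {T} (P : T -> Prop) l : NoDup l -> NoDup (cfilter P l).
Proof. induction 1; simpl; [constructor|].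
  destruct excluded_middle_informative; auto. constructor; auto.
  rewrite cfilter_In; tauto. Qed.

Lemma lsum_split {T} (f : T -> R) P l :
  lsum f l = lsum f (cfilter P l) + lsum f (cfilter (fun t => ~ P t) l).
Proof. induction l; simpl; [lra|].
  do 2 destruct excluded_middle_informative; simpl; try tauto; lra. Qed.

Lemma NoDup_app' {T} (l1 l2 : list T) : NoDup l1 -> NoDup l2 ->
  (forall t, In t l1 -> In t l2 -> False) -> NoDup (l1 ++ l2).
Proof. induction 1; simpl; intros; auto. constructor.
  - intro Hi; apply in_app_or in Hi; destruct Hi; eauto.
  - apply IHNoDup; eauto. Qed.

Definition summable {T} (f : T -> R) := bound (psums f).

Lemma sumR_lub {T} (f : T -> R) : summable f -> is_lub (psums f) (sumR f).
Proof. intro H; unfold sumR; destruct excluded_middle_informative; [|tauto].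
  destruct completeness; simpl; auto. Qed.

Lemma sumR_nosum {T} (f : T -> R) : ~ summable f -> sumR f = 0.
Proof. intro H; unfold sumR; destruct excluded_middle_informative; tauto. Qed.

Lemma sumR_ub {T} (f : T -> R) l : summable f -> NoDup l -> lsum f l <= sumR f.
Proof. intros H Hn; apply (sumR_lub f H); exists l; auto. Qed.

Lemma sumR_least {T} (f : T -> R) M : summable f ->
  (forall l, NoDup l -> lsum f l <= M) -> sumR f <= M.
Proof. intros H Hl; apply (sumR_lub f H). intros r [l [Hn ->]]; auto. Qed.

Lemma summable_intro {T} (f : T -> R) M : (forall l, NoDup l -> lsum f l <= M) -> summable f.
Proof. intros H; exists M; intros r [l [Hn ->]]; auto. Qed.

Lemma sumR_ge0 {T} (f : T -> R) : (forall t, 0 <= f t) -> 0 <= sumR f.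
Proof. intro H. destruct (classic (summable f)) as [Hs|Hs].
  - apply (Rle_trans _ (lsum f nil)); [simpl; lra|]. apply sumR_ub; auto. constructor.
  - rewrite sumR_nosum; auto; lra. Qed.

Lemma sumR_approx {T} (f : T -> R) eps : summable f -> eps > 0 ->
  exists l, NoDup l /\ sumR f - eps < lsum f l.
Proof. intros Hs He. apply NNPP; intro Hn.
  assert (sumR f <= sumR f - eps); [|lra].
  apply sumR_least; auto. intros l Hl. apply Rnot_lt_le. intro Hc; apply Hn; eauto. Qed.

Lemma sumR_le {T} (f g : T -> R) : (forall t, 0 <= f t) -> (forall t, f t <= g t) ->
  summable g -> summable f /\ sumR f <= sumR g.
Proof. intros H0 H1 Hg.
  assert (Hf : summable f).
  { apply (summable_intro _ (sumR g)). intros l Hl. eapply Rle_trans; [|apply sumR_ub; eauto].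
    apply lsum_le; auto. }
  split; auto. apply sumR_least; auto. intros l Hl. eapply Rle_trans; [|apply sumR_ub; eauto].
  apply lsum_le; auto. Qed.

Lemma sumR_single {T} (f : T -> R) a : (forall t, 0 <= f t) -> (forall t, t <> a -> f t = 0) ->
  summable f /\ sumR f = f a.
Proof. intros H0 H1.
  assert (Hl : forall l, NoDup l -> lsum f l <= f a).
  { induction 1; simpl. apply H0.
    destruct (classic (x = a)). subst. rewrite lsum_zero. lra.
    intros t Ht; apply H1; intro; subst; contradiction.
    rewrite H1 by auto. lra. }
  assert (Hs : summable f) by (eapply summable_intro; eauto).
  split; auto. apply Rle_antisym. apply sumR_least; auto.
  apply (Rle_trans _ (lsum f (a :: nil))). simpl; lra. apply sumR_ub; auto.
  constructor; [simpl; tauto | constructor]. Qed.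

Lemma sumR_scal {T} (f : T -> R) c : 0 <= c -> (forall t, 0 <= f t) ->
  sumR (fun t => c * f t) = c * sumR f.
Proof. intros Hc H0. destruct (Req_dec c 0) as [->|Hc0].
  - rewrite Rmult_0_l. apply Rle_antisym.
    + apply sumR_least. apply (summable_intro _ 0). intros; rewrite lsum_scal; lra.
      intros; rewrite lsum_scal; lra.
    + apply sumR_ge0; intros; lra.
  - destruct (classic (summable f)) as [Hs|Hs].
    + assert (Hs' : summable (fun t => c * f t)).
      { apply (summable_intro _ (c * sumR f)). intros l Hl; rewrite lsum_scal.
        apply Rmult_le_compat_l; auto. apply sumR_ub; auto. }
      apply Rle_antisym.
      * apply sumR_least; auto. intros l Hl; rewrite lsum_scal.
        apply Rmult_le_compat_l; auto. apply sumR_ub; auto.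
      * assert (sumR f <= sumR (fun t => c * f t) / c); [|
          apply (Rmult_le_compat_l c) in H; [|lra]; field_simplify in H; lra].
        apply sumR_least; auto. intros l Hl.
        apply (Rmult_le_reg_l c); [lra|]. field_simplify; [|lra].
        rewrite <- lsum_scal. apply sumR_ub; auto.
    + rewrite !sumR_nosum; auto. lra.
      intros [M HM]. apply Hs. apply (summable_intro _ (M / c)). intros l Hl.
      apply (Rmult_le_reg_l c); [lra|]. field_simplify; [|lra].
      rewrite <- lsum_scal. apply HM. exists l; auto.
Qed.


Lemma summable_scal {T} (f : T -> R) c : 0 <= c -> summable f -> summable (fun t => c * f t).
Proof. intros Hc [M HM]. apply (summable_intro _ (c * M)). intros l Hl; rewrite lsum_scal.
  apply Rmult_le_compat_l; auto. apply HM; exists l; auto. Qed.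

Lemma cfilter_length {T} (P : T -> Prop) l : (length (cfilter P l) <= length l)%nat.
Proof. induction l; simpl; auto. destruct excluded_middle_informative; simpl; lia. Qed.

Section Fiber.
Context {P H : Type} (F : P -> R) (pi : P -> H) (HF : forall p, 0 <= F p).
Definition fib (h : H) (p : P) := ind (pi p = h) * F p.
Definition outer (h : H) := sumR (fib h).

Lemma fib_nonneg h p : 0 <= fib h p.
Proof. unfold fib. pose proof (ind_01 (pi p = h)); pose proof (HF p); nra. Qed.

Lemma fiber_B_claim : (forall h, summable (fib h)) -> forall n (L : list P), (length L <= n)%nat ->
  NoDup L -> exists Hs, NoDup Hs /\ (forall h, In h Hs -> exists p, In p L /\ pi p = h) /\
  lsum F L <= lsum outer Hs.
Proof.
  intros Hfs n; induction n as [|n IH]; intros L Hlen HL.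
  - destruct L; simpl in *; [|lia]. exists nil; simpl; repeat split; try tauto; try constructor; lra.
  - destruct L as [|p L'].
    + exists nil; simpl; repeat split; try tauto; try constructor; lra.
    + set (h := pi p).
      set (L1 := cfilter (fun t => pi t = h) (p :: L')).
      set (L2 := cfilter (fun t => ~ pi t = h) (p :: L')).
      assert (HL2 : L2 = cfilter (fun t => ~ pi t = h) L').
      { unfold L2; simpl. destruct excluded_middle_informative; auto. exfalso; auto. }
      assert (Hlen2 : (length L2 <= n)%nat).
      { rewrite HL2. pose proof (cfilter_length (fun t => ~ pi t = h) L'). simpl in Hlen; lia. }
      destruct (IH L2 Hlen2 (cfilter_NoDup _ _ HL)) as [Hs2 [Hn2 [Hi2 Hs2le]]].
      exists (h :: Hs2). split; [|split].
      * constructor; auto. intro Hin. destruct (Hi2 h Hin) as [t [Ht Hpt]].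
        unfold L2 in Ht; rewrite cfilter_In in Ht. tauto.
      * intros h' [<-|Hin]. exists p; simpl; auto.
        destruct (Hi2 h' Hin) as [t [Ht Hpt]]. unfold L2 in Ht; rewrite cfilter_In in Ht.
        exists t; tauto.
      * rewrite (lsum_split F (fun t => pi t = h)). fold L1 L2. simpl lsum.
        assert (lsum F L1 <= outer h); [|lra].
        rewrite (lsum_ext F (fib h)). apply sumR_ub; auto. apply cfilter_NoDup; auto.
        intros t Ht. unfold L1 in Ht; rewrite cfilter_In in Ht. unfold fib.
        rewrite ind_true by tauto. lra.
Qed.

Lemma fiber_B : (forall h, summable (fib h)) -> summable outer ->
  summable F /\ sumR F <= sumR outer.
Proof. intros Hfs Ho.
  assert (Hl : forall L, NoDup L -> lsum F L <= sumR outer).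
  { intros L HL. destruct (fiber_B_claim Hfs (length L) L (le_n _) HL) as [Hs [Hn [_ Hle]]].
    eapply Rle_trans; eauto. apply sumR_ub; auto. }
  assert (Hs : summable F) by (eapply summable_intro; eauto).
  split; auto. apply sumR_least; auto. Qed.

Lemma fiber_A : summable F ->
  (forall h, summable (fib h)) /\ summable outer /\ sumR outer <= sumR F.
Proof. intros Hs.
  assert (Hfs : forall h, summable (fib h)).
  { intro h. apply (sumR_le (fib h) F); auto using fib_nonneg.
    intro p; unfold fib; pose proof (ind_01 (pi p = h)); pose proof (HF p); nra. }
  assert (Hcl : forall Hs, NoDup Hs -> forall eps, eps > 0 -> exists L, NoDup L /\
     (forall p, In p L -> In (pi p) Hs) /\ lsum outer Hs - eps <= lsum F L).
  { induction 1 as [|h Hs' Hh Hn IH]; intros eps He.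
    - exists nil; simpl; repeat split; try tauto; try constructor; lra.
    - destruct (IH (eps/2)) as [L' [HL' [Hi' Hle']]]; [lra|].
      destruct (sumR_approx (fib h) (eps/2) (Hfs h)) as [Lh [HLh Hap]]; [lra|].
      set (Lh' := cfilter (fun t => pi t = h) Lh).
      exists (Lh' ++ L'). split; [|split].
      + apply NoDup_app'; auto. apply cfilter_NoDup; auto.
        intros t Ht Ht'. unfold Lh' in Ht; rewrite cfilter_In in Ht.
        apply Hi' in Ht'. destruct Ht as [_ Ht]; rewrite Ht in Ht'. contradiction.
      + intros p Hp. apply in_app_or in Hp. destruct Hp as [Hp|Hp].
        unfold Lh' in Hp; rewrite cfilter_In in Hp. left; symmetry; tauto. right; auto.
      + rewrite lsum_app. simpl lsum.
        assert (lsum (fib h) Lh = lsum F Lh').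
        { rewrite (lsum_split (fib h) (fun t => pi t = h)).
          rewrite (lsum_zero (fib h) (cfilter (fun t => ~ pi t = h) Lh)). rewrite Rplus_0_r.
          apply lsum_ext. intros t Ht. unfold Lh' in Ht; rewrite cfilter_In in Ht.
          unfold fib; rewrite ind_true by tauto; lra.
          intros t Ht; rewrite cfilter_In in Ht. unfold fib; rewrite ind_false by tauto; lra. }
        unfold outer at 1. lra. }
  assert (Hb : forall Hs, NoDup Hs -> lsum outer Hs <= sumR F).
  { intros Hs0 Hn0. apply Rle_plus_epsilon. intros eps He.
    destruct (Hcl Hs0 Hn0 eps He) as [L [HL [_ Hle]]].
    pose proof (sumR_ub F L Hs HL). lra. }
  assert (Ho : summable outer) by (eapply summable_intro; eauto).
  repeat split; auto. apply sumR_least; auto.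
Qed.

Lemma fiber_eq : summable F -> sumR F = sumR outer.
Proof. intro Hs. destruct (fiber_A Hs) as [H1 [H2 H3]].
  destruct (fiber_B H1 H2) as [_ H4]. lra. Qed.
End Fiber.

Lemma lsum_map {A B} (f : B -> R) (g : A -> B) l : lsum f (map g l) = lsum (fun a => f (g a)) l.
Proof. induction l; simpl; auto. rewrite IHl; auto. Qed.

Lemma reindex {P Q} (F : P -> R) (iota : Q -> P) : (forall p, 0 <= F p) ->
  (forall q q', iota q = iota q' -> q = q') ->
  (forall p, (forall q, iota q <> p) -> F p = 0) ->
  summable (fun q => F (iota q)) -> summable F /\ sumR F = sumR (fun q => F (iota q)).
Proof. intros H0 Hinj Hout Hs.
  assert (Hpre : forall L, NoDup L -> (forall p, In p L -> exists q, iota q = p) ->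
     exists Lq, NoDup Lq /\ map iota Lq = L).
  { induction 1 as [|p L Hp Hn IH]; intros Hr.
    - exists nil; split; [constructor|auto].
    - destruct (Hr p (or_introl eq_refl)) as [q Hq].
      destruct IH as [Lq [HLq Hm]]. intros; apply Hr; right; auto.
      exists (q :: Lq); split; simpl. constructor; auto. intro Hi; apply Hp.
      rewrite <- Hm, <- Hq. apply in_map; auto. congruence. }
  assert (Hl : forall L, NoDup L -> lsum F L <= sumR (fun q => F (iota q))).
  { intros L HL. rewrite (lsum_split F (fun p => exists q, iota q = p)).
    rewrite (lsum_zero F (cfilter (fun t => ~ _) L)).
    2:{ intros t Ht; rewrite cfilter_In in Ht. apply Hout. intros q Hq; apply (proj2 Ht); eauto. }
    destruct (Hpre (cfilter (fun p => exists q, iota q = p) L)) as [Lq [HLq Hm]].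
    apply cfilter_NoDup; auto. intros p Hp; rewrite cfilter_In in Hp; tauto.
    rewrite <- Hm, lsum_map. rewrite Rplus_0_r. apply sumR_ub; auto. }
  assert (HsF : summable F) by (eapply summable_intro; eauto).
  split; auto. apply Rle_antisym. apply sumR_least; auto.
  apply sumR_least; auto. intros Lq HLq. rewrite <- lsum_map. apply sumR_ub; auto.
  apply FinFun.Injective_map_NoDup; auto. Qed.

Lemma sumR_prod {T1 T2} (a : T1 -> R) (b : T2 -> R) : (forall t, 0 <= a t) -> (forall t, 0 <= b t) ->
  summable a -> summable b ->
  summable (fun p : T1 * T2 => a (fst p) * b (snd p)) /\
  sumR (fun p : T1 * T2 => a (fst p) * b (snd p)) = sumR a * sumR b.
Proof. intros Ha Hb Hsa Hsb.
  set (F := fun p : T1 * T2 => a (fst p) * b (snd p)).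
  assert (HF : forall p, 0 <= F p) by (intro p; unfold F; pose proof (Ha (fst p)); pose proof (Hb (snd p)); nra).
  assert (Hfib : forall f, summable (fib F fst f) /\ sumR (fib F fst f) = a f * sumR b).
  { intro f.
    assert (E : (fun g => fib F fst f (f, g)) = (fun g => a f * b g)).
    { apply functional_extensionality; intro g; unfold fib, F; simpl. rewrite ind_true; auto; lra. }
    destruct (reindex (fib F fst f) (fun g => (f, g))) as [H1 H2].
    - apply fib_nonneg; auto.
    - intros q q' Hq; inversion Hq; auto.
    - intros [f' g] Hp. unfold fib; simpl. rewrite ind_false; [lra|]. intro; subst; apply (Hp g); auto.
    - rewrite E. apply summable_scal; auto.
    - split; auto. rewrite H2, E. apply sumR_scal; auto. }
  assert (Ho : outer F fst = fun f => sumR b * a f).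
  { apply functional_extensionality; intro f; unfold outer. rewrite (proj2 (Hfib f)); lra. }
  destruct (fiber_B F fst) as [H1 H2].
  - intro f; apply Hfib.
  - rewrite Ho; apply summable_scal; auto. apply sumR_ge0; auto.
  - split; auto. rewrite (fiber_eq F fst HF H1), Ho, sumR_scal; auto. lra. apply sumR_ge0; auto.
Qed.


Lemma sumR_zero {T} (f : T -> R) : (forall t, f t = 0) -> sumR f = 0.
Proof. intro H. assert (Hs : summable f) by (apply (summable_intro _ 0); intros; rewrite lsum_zero; auto; lra).
  apply Rle_antisym. apply sumR_least; auto. intros; rewrite lsum_zero; auto; lra.
  apply sumR_ge0; intros; rewrite H; lra. Qed.

Section Conf.
Context {X : Type}.

Lemma cfg_app (l1 l2 : list X) y : cfg (l1 ++ l2) y = (cfg l1 y + cfg l2 y)%nat.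
Proof. induction l1; simpl; auto. rewrite IHl1; lia. Qed.

Lemma cfg_In (l : list X) y : cfg l y <> 0%nat <-> In y l.
Proof. induction l; simpl. tauto.
  destruct excluded_middle_informative; split; intro H; try tauto; try lia.
  all: try (right; apply IHl; lia).
  all: destruct H; [contradiction|]; apply IHl in H; lia. Qed.

Lemma fin_cfg (l : list X) : fin_supp (cfg l).
Proof. exists l; intros y; apply cfg_In. Qed.

Lemma fin_add (f g : X -> nat) : fin_supp f -> fin_supp g -> fin_supp (fun y => (f y + g y)%nat).
Proof. intros [l1 H1] [l2 H2]. exists (l1 ++ l2). intros y Hy. apply in_or_app.
  destruct (Nat.eq_dec (f y) 0); [right; apply H2 | left; apply H1]; lia. Qed.

Lemma cfg_repeat (a : X) k y : cfg (repeat a k) y = if excluded_middle_informative (a = y) then k else 0%nat.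
Proof. induction k; simpl; destruct excluded_middle_informative; lia. Qed.

Lemma fin_exists_list (h : X -> nat) : fin_supp h -> exists l, cfg l = h.
Proof. intros [s Hs]. revert h Hs; induction s as [|a s IH]; intros h Hs.
  - exists nil. apply functional_extensionality; intro y. simpl.
    destruct (Nat.eq_dec (h y) 0); auto. destruct (Hs y n).
  - set (h' := fun y => if excluded_middle_informative (a = y) then 0%nat else h y).
    destruct (IH h') as [l' Hl'].
    { intros y Hy. unfold h' in Hy. destruct excluded_middle_informative; [lia|].
      destruct (Hs y) as [E|E]; auto. contradiction. }
    exists (repeat a (h a) ++ l'). apply functional_extensionality; intro y.
    rewrite cfg_app, cfg_repeat, Hl'. unfold h'. destruct excluded_middle_informative; subst; lia.
Qed.

Lemma cfg_perm (l l' : list X) : cfg l = cfg l' -> Permutation l l'.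
Proof. revert l'; induction l as [|a l IH]; intros l' H.
  - destruct l' as [|b l']; auto. exfalso.
    assert (cfg (b :: l') b <> 0%nat) by (apply cfg_In; left; auto).
    rewrite <- H in H0; simpl in H0; lia.
  - assert (Hin : In a l') by (apply cfg_In; rewrite <- H; simpl; destruct excluded_middle_informative; [lia|tauto]).
    destruct (in_split _ _ Hin) as [L1 [L2 ->]].
    eapply perm_trans; [|apply Permutation_middle]. constructor. apply IH.
    apply functional_extensionality; intro y. pose proof (f_equal (fun f => f y) H) as Hy.
    simpl in Hy. rewrite cfg_app in Hy |- *. simpl in Hy. lia.
Qed.

Definition listof (h : X -> nat) : list X :=
  match excluded_middle_informative (exists l, cfg l = h) with
  | left H => proj1_sig (constructive_indefinite_description _ H)
  | right _ => nil end.

Lemma cfg_listof h : fin_supp h -> cfg (listof h) = h.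
Proof. intro Hf. unfold listof. destruct excluded_middle_informative as [H|H].
  destruct constructive_indefinite_description; auto. destruct H; apply fin_exists_list; auto. Qed.

Fixpoint lprod (u : X -> R) (l : list X) : R :=
  match l with nil => 1 | a :: l' => u a * lprod u l' end.

Lemma lprod_app u l1 l2 : lprod u (l1 ++ l2) = lprod u l1 * lprod u l2.
Proof. induction l1; simpl; [lra|rewrite IHl1; lra]. Qed.

Lemma lprod_perm u l l' : Permutation l l' -> lprod u l = lprod u l'.
Proof. induction 1; simpl; try rewrite IHPermutation; try lra; congruence. Qed.

Definition W u h := lprod u (listof h).

Lemma W_cfg u l : W u (cfg l) = lprod u l.
Proof. unfold W. apply lprod_perm. apply cfg_perm. apply cfg_listof, fin_cfg. Qed.

Lemma W_add u f g : fin_supp f -> fin_supp g -> W u (fun y => (f y + g y)%nat) = W u f * W u g.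
Proof. intros Hf Hg.
  assert (E : (fun y => (f y + g y)%nat) = cfg (listof f ++ listof g)).
  { apply functional_extensionality; intro y. rewrite cfg_app, !cfg_listof; auto. }
  rewrite E, W_cfg, lprod_app. reflexivity. Qed.

Lemma W_zero u : W u (fun _ => 0%nat) = 1.
Proof. change (fun _ : X => 0%nat) with (cfg (@nil X)). rewrite W_cfg; reflexivity. Qed.

Definition unit01 (u : X -> R) := forall y, 0 <= u y <= 1.

Lemma lprod_bounds u l : unit01 u -> 0 <= lprod u l <= 1.
Proof. intro H; induction l; simpl; [lra|]. specialize (H a). nra. Qed.

Lemma W_bounds u h : unit01 u -> 0 <= W u h <= 1.
Proof. intros; apply lprod_bounds; auto. Qed.

Lemma lprod_mono u v l : (forall y, 0 <= u y <= v y) -> lprod u l <= lprod v l.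
Proof. intro H; induction l; simpl; [lra|].
  assert (0 <= lprod u l). { clear IHl; induction l; simpl; [lra|]. specialize (H a0); nra. }
  specialize (H a); nra. Qed.

Lemma lprod_one l : lprod (fun _ => 1) l = 1.
Proof. induction l; simpl; [|rewrite IHl]; lra. Qed.

Lemma W_one h : W (fun _ => 1) h = 1.
Proof. apply lprod_one. Qed.

Definition mask (B : X -> Prop) (u : X -> R) y := if excluded_middle_informative (B y) then 0 else u y.

Lemma mask_unit B u : unit01 u -> unit01 (mask B u).
Proof. intros H y; unfold mask; destruct excluded_middle_informative; auto; lra. Qed.

Lemma lprod_mask B u l : lprod (mask B u) l = ind (forall y, In y l -> ~ B y) * lprod u l.
Proof. induction l as [|a l IH]; simpl.
  - rewrite ind_true; [lra|tauto].
  - rewrite IH. unfold mask; destruct excluded_middle_informative as [Hb|Hb].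
    + rewrite (ind_false (forall y, a = y \/ In y l -> ~ B y)); [lra|]. intro Hc; apply (Hc a); auto.
    + destruct (classic (forall y, In y l -> ~ B y)) as [Hc|Hc].
      * rewrite !ind_true; [lra| |auto]. intros y [<-|Hy]; auto.
      * rewrite !ind_false; [lra| |auto]. intro Hd; apply Hc; auto.
Qed.

Lemma W_mask B u h : fin_supp h -> W (mask B u) h = ind (forall y, B y -> h y = 0%nat) * W u h.
Proof. intro Hf. unfold W. rewrite lprod_mask. f_equal. apply ind_ext.
  pose proof (cfg_listof h Hf) as Hc. split; intros H y.
  - intros Hb. rewrite <- Hc. destruct (Nat.eq_dec (cfg (listof h) y) 0); auto. apply cfg_In in n. exfalso; apply (H y n Hb).
  - intros Hi Hb. apply cfg_In in Hi. apply Hi. rewrite Hc. apply H, Hb. Qed.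

Lemma mask_mono B u v : (forall y, 0 <= u y <= v y) -> forall y, 0 <= mask B u y <= mask B v y.
Proof. intros H y; unfold mask; destruct excluded_middle_informative; auto; lra. Qed.

End Conf.


Section GF.
Context {X : Type} (mu : X -> (X -> nat) -> R) (Hmu : is_BRW mu).

Lemma mu_summable x : summable (mu x).
Proof. destruct (Hmu x) as [_ [_ H]]. apply NNPP; intro Hn. rewrite sumR_nosum in H; auto; lra. Qed.

Definition G (u : X -> R) (x : X) := sumR (fun f => mu x f * W u f).

Lemma G_summable u x : unit01 u -> summable (fun f => mu x f * W u f).
Proof. intro Hu. destruct (Hmu x) as [H0 _].
  apply (sumR_le _ (mu x)); auto using mu_summable.
  intro f; pose proof (W_bounds u f Hu); pose proof (H0 f); nra.
  intro f; pose proof (W_bounds u f Hu); pose proof (H0 f); nra. Qed.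

Lemma G_unit u : unit01 u -> unit01 (G u).
Proof. intros Hu x. destruct (Hmu x) as [H0 [_ H1]]. split.
  apply sumR_ge0; intro f; pose proof (W_bounds u f Hu); pose proof (H0 f); nra.
  rewrite <- H1. apply sumR_le; auto using mu_summable.
  intro f; pose proof (W_bounds u f Hu); pose proof (H0 f); nra.
  intro f; pose proof (W_bounds u f Hu); pose proof (H0 f); nra. Qed.

Lemma lprod_mono' (u v : X -> R) l : (forall y, 0 <= u y <= v y) -> lprod u l <= lprod v l.
Proof. apply lprod_mono. Qed.

Lemma G_mono u v : unit01 u -> unit01 v -> (forall y, u y <= v y) -> forall x, G u x <= G v x.
Proof. intros Hu Hv H x. destruct (Hmu x) as [H0 _]. apply sumR_le; auto using G_summable.
  intro f; pose proof (W_bounds u f Hu); pose proof (H0 f); nra.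
  intro f. apply Rmult_le_compat_l; auto. apply lprod_mono. intro y; specialize (Hu y); specialize (H y); lra. Qed.

Lemma G_one x : G (fun _ => 1) x = 1.
Proof. unfold G. destruct (Hmu x) as [_ [_ H1]]. transitivity (sumR (mu x)); auto. f_equal.
  apply functional_extensionality; intro f; rewrite W_one; lra. Qed.

Lemma offl_GF l : (forall h, 0 <= offl mu l h) /\ (forall h, offl mu l h <> 0 -> fin_supp h) /\
  forall u, unit01 u -> summable (fun h => offl mu l h * W u h) /\
    sumR (fun h => offl mu l h * W u h) = lprod (G u) l.
Proof.
  induction l as [|a l [IH0 [IH1 IH2]]].
  - simpl. split; [|split].
    + intro h; apply ind_01.
    + intros h Hh. exists nil; intros y Hy. unfold ind in Hh. destruct excluded_middle_informative; [|lra].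
      apply Hy; auto.
    + intros u Hu. destruct (sumR_single (fun h => ind (forall y, h y = 0%nat) * W u h) (fun _ => 0%nat)).
      * intro h; pose proof (ind_01 (forall y, h y = 0%nat)); pose proof (W_bounds u h Hu); nra.
      * intros h Hh. rewrite ind_false; [lra|]. intro Hc; apply Hh; apply functional_extensionality; auto.
      * split; auto. rewrite H0, W_zero, ind_true; auto; lra.
  - destruct (Hmu a) as [M0 [M1 M2]].
    set (m1 := mu a). set (m2 := offl mu l).
    assert (Hc : forall h, offl mu (a :: l) h =
      sumR (fun p : (X -> nat) * (X -> nat) => ind (forall y, (fst p y + snd p y)%nat = h y) * (m1 (fst p) * m2 (snd p)))) by reflexivity.
    assert (Hnn : forall p : (X -> nat) * (X -> nat), forall h, 0 <= ind (forall y, (fst p y + snd p y)%nat = h y) * (m1 (fst p) * m2 (snd p))).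
    { intros p h. pose proof (ind_01 (forall y, (fst p y + snd p y)%nat = h y)). pose proof (M0 (fst p)). pose proof (IH0 (snd p)).
      unfold m1, m2. apply Rmult_le_pos; [lra|]. apply Rmult_le_pos; auto. }
    split; [|split].
    + intro h; rewrite Hc; apply sumR_ge0; auto.
    + intros h Hh. rewrite Hc in Hh. apply NNPP; intro Hnf. apply Hh. apply sumR_zero. intros p.
      destruct (classic (forall y, (fst p y + snd p y)%nat = h y)) as [Hp|Hp]; [|rewrite ind_false; auto; lra].
      destruct (Req_dec (m1 (fst p)) 0) as [E|E]; [rewrite E; lra|].
      destruct (Req_dec (m2 (snd p)) 0) as [E'|E']; [rewrite E'; lra|].
      exfalso. apply Hnf. replace h with (fun y => (fst p y + snd p y)%nat) by (apply functional_extensionality; auto).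
      apply fin_add; auto.
    + intros u Hu.
      set (pi := fun (p : (X -> nat) * (X -> nat)) (y : X) => (fst p y + snd p y)%nat).
      set (F := fun p : (X -> nat) * (X -> nat) => m1 (fst p) * m2 (snd p) * W u (pi p)).
      set (a1 := fun f => m1 f * W u f). set (a2 := fun f => m2 f * W u f).
      assert (HF : forall p, F p = a1 (fst p) * a2 (snd p)).
      { intro p. unfold F, a1, a2.
        destruct (Req_dec (m1 (fst p)) 0) as [E|E]; [rewrite E; lra|].
        destruct (Req_dec (m2 (snd p)) 0) as [E'|E']; [rewrite E'; lra|].
        unfold pi. rewrite W_add. lra. apply M1; auto. apply IH1; auto. }
      assert (Ha1 : forall t, 0 <= a1 t) by (intro t; unfold a1, m1; pose proof (W_bounds u t Hu); pose proof (M0 t); nra).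
      assert (Ha2 : forall t, 0 <= a2 t) by (intro t; unfold a2, m2; pose proof (W_bounds u t Hu); pose proof (IH0 t); nra).
      destruct (sumR_prod a1 a2 Ha1 Ha2) as [Hs Hsum]; [apply G_summable; auto| apply IH2; auto|].
      assert (EF : F = fun p => a1 (fst p) * a2 (snd p)) by (apply functional_extensionality; auto).
      assert (HF0 : forall p, 0 <= F p) by (intro p; rewrite HF; pose proof (Ha1 (fst p)); pose proof (Ha2 (snd p)); nra).
      assert (HsF : summable F) by (rewrite EF; auto).
      assert (Hout : outer F pi = fun h => offl mu (a :: l) h * W u h).
      { apply functional_extensionality; intro h. unfold outer. rewrite Hc.
        rewrite Rmult_comm, <- sumR_scal; [| apply W_bounds; auto | intro p; apply Hnn].
        f_equal. apply functional_extensionality; intro p. unfold fib, F.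
        destruct (classic (pi p = h)) as [Hp|Hp].
        - rewrite Hp, !ind_true; [lra| |auto]. intro y; rewrite <- Hp; reflexivity.
        - rewrite !ind_false; [lra| |auto]. intro Hq; apply Hp. apply functional_extensionality; auto. }
      destruct (fiber_A F pi HF0 HsF) as [_ [Hso _]].
      rewrite <- Hout. split; auto. rewrite <- (fiber_eq F pi HF0 HsF), EF, Hsum.
      simpl. f_equal. apply IH2; auto.
Qed.

Lemma offl_nonneg l h : 0 <= offl mu l h.
Proof. apply offl_GF. Qed.
Lemma offl_fin l h : offl mu l h <> 0 -> fin_supp h.
Proof. apply offl_GF. Qed.
Lemma offl_mass l : summable (offl mu l) /\ sumR (offl mu l) = 1.
Proof. destruct (proj2 (proj2 (offl_GF l)) (fun _ => 1)) as [H1 H2]. intro; lra.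
  assert (E : (fun h => offl mu l h * W (fun _ => 1) h) = offl mu l).
  { apply functional_extensionality; intro h; rewrite W_one; lra. }
  rewrite E in H1, H2. split; auto. rewrite H2.
  replace (G (fun _ => 1)) with (fun _ : X => 1). apply lprod_one.
  apply functional_extensionality; intro; rewrite G_one; auto. Qed.

End GF.


Section Prob.
Context {X : Type} {mu : X -> (X -> nat) -> R} {x0 : X} (Z : BRW_realization mu x0).
Context (e : nat -> X) (He : forall y, exists n, e n = y).

Notation Om := (rOm Z).
Notation Fm := (rF Z).
Notation P := (rP Z).
Notation eta := (reta Z).

Lemma meas_ext (E E' : Om -> Prop) : Fm E -> (forall w, E w <-> E' w) -> Fm E'.
Proof. intros H1 H2. rewrite <- (pred_ext E E' H2). auto. Qed.

Lemma P_ext (E E' : Om -> Prop) : (forall w, E w <-> E' w) -> P E = P E'.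
Proof. intros H; rewrite (pred_ext E E' H); auto. Qed.

Lemma meas_True : Fm (fun _ => True).
Proof. apply F_full. Qed.
Lemma meas_not E : Fm E -> Fm (fun w => ~ E w).
Proof. apply F_compl. Qed.
Lemma meas_False : Fm (fun _ => False).
Proof. eapply meas_ext. apply meas_not, meas_True. simpl; tauto. Qed.
Lemma meas_const (C : Prop) : Fm (fun _ => C).
Proof. destruct (classic C). eapply meas_ext; [apply meas_True|]; simpl; tauto.
  eapply meas_ext; [apply meas_False|]; simpl; tauto. Qed.
Lemma meas_exn (E : nat -> Om -> Prop) : (forall n, Fm (E n)) -> Fm (fun w => exists n, E n w).
Proof. apply F_union. Qed.
Lemma meas_alln (E : nat -> Om -> Prop) : (forall n, Fm (E n)) -> Fm (fun w => forall n, E n w).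
Proof. intro H. eapply meas_ext. apply meas_not, meas_exn. intro n; apply meas_not, H.
  intro w; split. intros Hn n. apply NNPP; intro; apply Hn; eauto. intros Ha [n Hn]; auto. Qed.
Lemma meas_or E1 E2 : Fm E1 -> Fm E2 -> Fm (fun w => E1 w \/ E2 w).
Proof. intros H1 H2. eapply meas_ext.
  apply (meas_exn (fun n w => match n with O => E1 w | _ => E2 w end)). intros [|n]; auto.
  intro w; split. intros [[|n] Hn]; auto. intros [H|H]. exists O; auto. exists 1%nat; auto. Qed.
Lemma meas_and E1 E2 : Fm E1 -> Fm E2 -> Fm (fun w => E1 w /\ E2 w).
Proof. intros H1 H2. eapply meas_ext. apply (meas_not (fun w => ~ E1 w \/ ~ E2 w)).
  apply meas_or; apply meas_not; auto.
  intro w; simpl; tauto. Qed.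
Lemma meas_imp E1 E2 : Fm E1 -> Fm E2 -> Fm (fun w => E1 w -> E2 w).
Proof. intros H1 H2. eapply meas_ext. apply (meas_or (fun w => ~ E1 w) E2). apply meas_not, H1. apply H2.
  intro w; simpl; tauto. Qed.
Lemma meas_allX (E : X -> Om -> Prop) : (forall y, Fm (E y)) -> Fm (fun w => forall y, E y w).
Proof. intro H. eapply meas_ext. apply (meas_alln (fun n => E (e n))). auto.
  intro w; split; auto. intros Ha y. destruct (He y) as [n <-]; auto. Qed.
Lemma meas_exX (E : X -> Om -> Prop) : (forall y, Fm (E y)) -> Fm (fun w => exists y, E y w).
Proof. intro H. eapply meas_ext. apply (meas_exn (fun n => E (e n))). auto.
  intro w; split. intros [n Hn]; eauto. intros [y Hy]. destruct (He y) as [n <-]; eauto. Qed.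
Lemma meas_eta n y k : Fm (fun w => eta n w y = k).
Proof. apply eta_meas. Qed.
Lemma meas_eta_fun n h : Fm (fun w => eta n w = h).
Proof. eapply meas_ext. apply (meas_allX (fun y w => eta n w y = h y)). intro; apply meas_eta.
  intro w; split. intro; apply functional_extensionality; auto. intros ->; auto. Qed.

Definition hist n (hs : nat -> X -> nat) (w : Om) := forall k, (k <= n)%nat -> eta k w = hs k.
Lemma meas_hist n hs : Fm (hist n hs).
Proof. apply meas_alln; intro k. apply meas_imp. apply meas_const. apply meas_eta_fun. Qed.

Lemma P_nonneg E : Fm E -> 0 <= P E.
Proof. apply P_nonneg. Qed.

Lemma P_empty : P (fun _ => False) = 0.
Proof. pose proof (P_sigma Z (fun _ _ => False) (fun _ => meas_False) (fun _ _ _ _ H _ => H)) as H.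
  set (p := P (fun _ => False)) in *.
  rewrite (P_ext _ (fun _ => False)) in H by (intro w; split; [intros [_ []]|tauto]). fold p in H.
  assert (H' : Un_cv (fun N => sum_f_R0 (fun _ => p) (S N) - sum_f_R0 (fun _ => p) N) (p - p)).
  { apply CV_minus; auto. intros eps Heps; destruct (H eps Heps) as [N HN]; exists N; intros; apply HN; lia. }
  simpl in H'. assert (Un_cv (fun _ => p) 0).
  { replace 0 with (p - p) by lra. eapply Un_cv_ext; [|apply H']. intro; simpl; lra. }
  apply (UL_sequence (fun _ => p)); auto. intros eps He'; exists O; intros; rewrite R_dist_eq; auto. Qed.

Lemma P_add E1 E2 : Fm E1 -> Fm E2 -> (forall w, E1 w -> E2 w -> False) ->
  P (fun w => E1 w \/ E2 w) = P E1 + P E2.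
Proof. intros H1 H2 Hd.
  set (E := fun n w => match n with O => E1 w | 1%nat => E2 w | _ => False end).
  assert (HE : forall n, Fm (E n)) by (intros [|[|n]]; simpl; auto using meas_False).
  assert (Hdis : forall n m w, n <> m -> E n w -> E m w -> False).
  { intros [|[|n]] [|[|m]] w; simpl; intros; try lia; eauto. }
  pose proof (P_sigma Z E HE Hdis) as H.
  rewrite (P_ext _ (fun w => E1 w \/ E2 w)) in H.
  - apply (UL_sequence _ _ _ H). intros eps Heps; exists 1%nat; intros n Hn.
    destruct n as [|n]; [lia|]. replace (sum_f_R0 (fun k => P (E k)) (S n)) with (P E1 + P E2).
    rewrite R_dist_eq; auto. clear Hn.
    assert (HE2: forall k, P (E (S (S k))) = 0) by (intro k; unfold E; apply P_empty).
    induction n. unfold E; simpl; reflexivity.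
    change (sum_f_R0 (fun k => P (E k)) (S (S n))) with (sum_f_R0 (fun k => P (E k)) (S n) + P (E (S (S n)))).
    rewrite HE2, <- IHn; lra.
  - intro w; split. intros [[|[|n]] Hn]; simpl in Hn; tauto.
    intros [Hw|Hw]. exists O; auto. exists 1%nat; auto.
Qed.

Lemma P_split E C : Fm E -> Fm C -> P E = P (fun w => E w /\ C w) + P (fun w => E w /\ ~ C w).
Proof. intros HE HC. rewrite <- P_add. apply P_ext; intro w; tauto.
  apply meas_and; auto. apply meas_and; auto. apply meas_not; auto. tauto. Qed.

Lemma P_mono E1 E2 : Fm E1 -> Fm E2 -> (forall w, E1 w -> E2 w) -> P E1 <= P E2.
Proof. intros H1 H2 Hi. rewrite (P_split E2 E1 H2 H1).
  rewrite (P_ext (fun w => E2 w /\ E1 w) E1) by (intro w; split; [tauto|auto]).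
  pose proof (P_nonneg (fun w => E2 w /\ ~ E1 w)). assert (Fm (fun w => E2 w /\ ~ E1 w)).
  apply meas_and; auto; apply meas_not; auto. specialize (H H0). lra. Qed.

Lemma P_le1 E : Fm E -> P E <= 1.
Proof. intro H. rewrite <- (P_full Z). apply P_mono; auto using meas_True. Qed.

Lemma P_compl E : Fm E -> P (fun w => ~ E w) = 1 - P E.
Proof. intro H. rewrite <- (P_full Z). rewrite (P_split (fun _ => True) E meas_True H).
  rewrite (P_ext (fun w => True /\ E w) E), (P_ext (fun w => True /\ ~ E w) (fun w => ~ E w)); try lra;
  intro; tauto. Qed.

Lemma P_union_le E1 E2 : Fm E1 -> Fm E2 -> P (fun w => E1 w \/ E2 w) <= P E1 + P E2.
Proof. intros H1 H2. rewrite (P_ext _ (fun w => E1 w \/ (E2 w /\ ~ E1 w))) by (intro; tauto).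
  rewrite P_add; auto. pose proof (P_mono (fun w => E2 w /\ ~ E1 w) E2). 
  assert (P (fun w => E2 w /\ ~ E1 w) <= P E2); [apply H; auto; [apply meas_and; auto; apply meas_not; auto| tauto]|lra].
  apply meas_and; auto; apply meas_not; auto. tauto. Qed.

Lemma P_inc (E : nat -> Om -> Prop) : (forall n, Fm (E n)) -> (forall n w, E n w -> E (S n) w) ->
  Un_cv (fun n => P (E n)) (P (fun w => exists n, E n w)).
Proof. intros HE Hinc.
  assert (Hmono : forall n m w, (n <= m)%nat -> E n w -> E m w).
  { intros n m w Hnm; induction Hnm; auto. }
  set (D := fun n w => match n with O => E O w | S k => E (S k) w /\ ~ E k w end).
  assert (HD : forall n, Fm (D n)) by (intros [|n]; unfold D; [auto| apply meas_and; auto; apply meas_not; auto]).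
  pose proof (P_sigma Z D HD) as H.
  assert (Hu : forall w, (exists n, D n w) <-> (exists n, E n w)).
  { intro w; split. intros [[|n] Hn]; simpl in Hn; [exists O|exists (S n)]; tauto.
    intros [n Hn]. induction n. exists O; auto. destruct (classic (E n w)); auto. exists (S n); simpl; auto. }
  rewrite (P_ext _ _ Hu) in H.
  eapply Un_cv_ext; [|apply H].
  - intro n; induction n; simpl; auto. rewrite IHn. rewrite (P_split (E (S n)) (E n)); auto.
    rewrite (P_ext (fun w => E (S n) w /\ E n w) (E n)); auto. intro w; split; [tauto|auto].
  - intros n m w Hnm Hn Hm. destruct (Nat.lt_total n m) as [Hl|[Hl|Hl]]; [| contradiction |].
    + destruct m as [|m]; [lia|]. simpl in Hm. apply (proj2 Hm). destruct n as [|n]; simpl in Hn.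
      apply (Hmono O); auto; lia. apply (Hmono (S n)); [lia|tauto].
    + destruct n as [|n]; [lia|]. simpl in Hn. apply (proj2 Hn). destruct m as [|m]; simpl in Hm.
      apply (Hmono O); auto; lia. apply (Hmono (S m)); [lia|tauto].
Qed.

Lemma P_dec (E : nat -> Om -> Prop) : (forall n, Fm (E n)) -> (forall n w, E (S n) w -> E n w) ->
  Un_cv (fun n => P (E n)) (P (fun w => forall n, E n w)).
Proof. intros HE Hdec.
  pose proof (P_inc (fun n w => ~ E n w) (fun n => meas_not _ (HE n))) as H.
  specialize (H ltac:(intros n w H1 H2; apply H1, Hdec, H2)).
  assert (Hm : Fm (fun w => forall n, E n w)) by (apply meas_alln; auto).
cbv beta in H.   rewrite (P_ext (fun w => exists n, ~ E n w) (fun w => ~ forall n, E n w)) in H.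
  rewrite P_compl in H; auto.
  assert (H' : Un_cv (fun n => 1 - P (fun w => ~ E n w)) (1 - (1 - P (fun w => forall n, E n w)))).
  { apply CV_minus. intros eps Heps; exists O; intros; rewrite R_dist_eq; auto. apply H. }
  assert (Hs: forall n, 1 - P (fun w => ~ E n w) = P (E n)) by (intro; rewrite P_compl; auto; lra).
  apply (Un_cv_ext _ _ Hs). replace (P (fun w => forall n, E n w)) with (1 - (1 - P (fun w => forall n, E n w))) by lra.
  auto.
  intro w; split. intros [n Hn] Ha; auto. intro Hn; apply NNPP; intro Hc; apply Hn; intro n; apply NNPP; intro; apply Hc; eauto.
Qed.

Lemma P_null_union (E : nat -> Om -> Prop) : (forall n, Fm (E n)) -> (forall n, P (E n) = 0) ->
  P (fun w => exists n, E n w) = 0.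
Proof. intros HE H0.
  set (F := fun n w => exists k, (k <= n)%nat /\ E k w).
  assert (HF : forall n, Fm (F n)) by (intro n; apply meas_exn; intro k; apply meas_and; auto; apply meas_const).
  assert (HF0 : forall n, P (F n) = 0).
  { induction n.
    - rewrite (P_ext _ (E O)); auto. intro w; split. intros [k [Hk Hw]]. replace k with O in Hw by lia; auto. exists O; auto.
    - apply Rle_antisym; [|apply P_nonneg; auto].
      rewrite (P_ext _ (fun w => F n w \/ E (S n) w)).
      pose proof (P_union_le (F n) (E (S n)) (HF n) (HE (S n))). rewrite IHn, H0 in H; lra.
      intro w; split. intros [k [Hk Hw]]. destruct (Nat.eq_dec k (S n)). subst; auto. left; exists k; split; auto; lia.
      intros [[k [Hk Hw]]|Hw]. exists k; split; auto. exists (S n); auto. }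
  assert (Hi : forall n w, F n w -> F (S n) w) by (intros n w [k [Hk Hw]]; exists k; split; auto).
  pose proof (P_inc F HF Hi) as Hc.
  rewrite (P_ext (fun w => exists n, F n w) (fun w => exists n, E n w)) in Hc.
  - apply (UL_sequence _ _ _ Hc). intros eps Heps; exists O; intros; rewrite HF0, R_dist_eq; auto.
  - intro w; split. intros [n [k [_ Hk]]]; eauto. intros [n Hn]; exists n, n; auto.
Qed.

End Prob.


Fixpoint dec_len (len : nat) (k : nat) : list nat :=
  match len with O => nil | S m => let (a, b) := Cantor.of_nat k in a :: dec_len m b end.
Definition decode k := let (len, c) := Cantor.of_nat k in dec_len len c.

Lemma decode_surj l : exists k, decode k = l.
Proof.
  assert (H : forall l, exists c, dec_len (length l) c = l).
  { clear l; intro l; induction l as [|a l [c Hc]]. exists O; auto.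
    exists (Cantor.to_nat (a, c)). cbn [length dec_len]. rewrite Cantor.cancel_of_to. congruence. }
  destruct (H l) as [c Hc]. exists (Cantor.to_nat (length l, c)). unfold decode.
  rewrite Cantor.cancel_of_to; auto. Qed.

Lemma list_bound {T} (L : list T) (Q : nat -> T -> Prop) : (forall t, In t L -> exists k, Q k t) ->
  exists N, forall t, In t L -> exists k, (k <= N)%nat /\ Q k t.
Proof. induction L as [|a L IH]; intro H. exists O; simpl; tauto.
  destruct IH as [N HN]. intros; apply H; right; auto.
  destruct (H a) as [k Hk]. left; auto. exists (Nat.max N k). intros t [<-|Ht].
  exists k; split; auto; lia. destruct (HN t Ht) as [k' [Hk' Hq]]; exists k'; split; auto; lia. Qed.

Lemma least_ex (Q : nat -> Prop) : (exists k, Q k) -> exists k, Q k /\ forall j, (j < k)%nat -> ~ Q j.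
Proof. intros [k Hk]. revert Hk; induction k as [k IH] using (well_founded_induction Nat.lt_wf_0).
  intro Hk. destruct (classic (exists j, (j < k)%nat /\ Q j)) as [[j [Hj Hq]]|Hn].
  apply (IH j); auto. exists k; split; auto. intros j Hj Hq; apply Hn; eauto. Qed.

Lemma cv_le_bound (s : nat -> R) l M : Un_cv s l -> (forall n, s n <= M) -> l <= M.
Proof. intros H Hb. apply Rnot_lt_le; intro Hc. destruct (H (l - M)) as [N HN]; [lra|].
  specialize (HN N (le_n _)). specialize (Hb N). unfold R_dist in HN.
  apply Rabs_def2 in HN. lra. Qed.

Section Count.
Context {X : Type} {mu : X -> (X -> nat) -> R} {x0 : X} (Z : BRW_realization mu x0).
Context (e : nat -> X) (He : forall y, exists n, e n = y).

Notation Om := (rOm Z).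
Notation Fm := (rF Z).
Notation P := (rP Z).
Notation eta := (reta Z).

Definition conf k : X -> nat := cfg (map e (decode k)).

Lemma conf_surj h : fin_supp h -> exists k, conf k = h.
Proof. intro Hf. destruct (fin_exists_list h Hf) as [l Hl].
  assert (Hm : exists ln, map e ln = l).
  { clear Hl. induction l as [|a l [lm Hlm]]. exists nil; auto. destruct (He a) as [n Hn].
    exists (n :: lm); simpl; congruence. }
  destruct Hm as [lm Hlm]. destruct (decode_surj lm) as [k Hk]. exists k; unfold conf; congruence. Qed.

Lemma fin_supp_iff (h : X -> nat) : fin_supp h <->
  exists N, forall j, h (e j) <> 0%nat -> exists i, (i <= N)%nat /\ e i = e j.
Proof. split.
  - intros [l Hl]. destruct (list_bound l (fun k y => e k = y)) as [N HN]. intros; apply He.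
    exists N. intros j Hj. apply HN, Hl, Hj.
  - intros [N HN]. exists (map e (seq 0 (S N))). intros y Hy. destruct (He y) as [j <-].
    destruct (HN j Hy) as [i [Hi Hei]]. rewrite <- Hei. apply in_map. apply in_seq. lia. Qed.

Lemma meas_fin n : Fm (fun w => fin_supp (eta n w)).
Proof. eapply meas_ext; [|intro w; symmetry; apply fin_supp_iff].
  apply meas_exn; intro N. apply meas_alln; intro j. apply meas_imp. apply meas_not, meas_eta. apply meas_const. Qed.

Definition isfirst k := forall j, (j < k)%nat -> conf j <> conf k.
Fixpoint Lf N := match N with O => conf O :: nil
  | S N' => if excluded_middle_informative (isfirst (S N')) then conf (S N') :: Lf N' else Lf N' end.

Lemma Lf_In N h : In h (Lf N) <-> exists k, (k <= N)%nat /\ isfirst k /\ conf k = h.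
Proof. induction N as [|N IH]; simpl.
  - split. intros [<-|[]]. exists O; repeat split; auto. intros j Hj; lia.
    intros [k [Hk [_ <-]]]. left; f_equal; lia.
  - destruct excluded_middle_informative as [Hf|Hf]; simpl; rewrite IH; split.
    + intros [<-|[k [Hk H]]]. exists (S N); auto. exists k; split; auto.
    + intros [k [Hk H]]. destruct (Nat.eq_dec k (S N)). subst; left; tauto. right; exists k; split; auto; lia.
    + intros [k [Hk H]]. exists k; split; auto.
    + intros [k [Hk H]]. destruct (Nat.eq_dec k (S N)). subst; tauto. exists k; split; auto; lia.
Qed.

Lemma Lf_NoDup N : NoDup (Lf N).
Proof. induction N; simpl. constructor; [simpl; tauto|constructor].
  destruct excluded_middle_informative as [Hf|Hf]; auto. constructor; auto.
  rewrite Lf_In. intros [k [Hk [_ Hc]]]. apply (Hf k); auto. lia. Qed.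

Lemma P_countable (E : (X -> nat) -> Om -> Prop) :
  (forall h, Fm (E h)) -> (forall h h' w, E h w -> E h' w -> h = h') ->
  summable (fun h => ind (fin_supp h) * P (E h)) /\
  P (fun w => exists h, fin_supp h /\ E h w) = sumR (fun h => ind (fin_supp h) * P (E h)).
Proof. intros HE Hd.
  set (D := fun k w => E (conf k) w /\ isfirst k).
  set (g := fun h => ind (fin_supp h) * P (E h)).
  assert (Hg0 : forall h, 0 <= g h).
  { intro h; unfold g. pose proof (ind_01 (fin_supp h)). pose proof (P_nonneg Z (E h) (HE h)). nra. }
  assert (HD : forall k, Fm (D k)) by (intro k; apply meas_and; auto; apply meas_const).
  assert (HDd : forall n m w, n <> m -> D n w -> D m w -> False).
  { intros n m w Hnm [H1 H2] [H3 H4]. pose proof (Hd _ _ _ H1 H3) as Hc.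
    destruct (Nat.lt_total n m) as [Hl|[Hl|Hl]]; [apply (H4 n Hl)| |apply (H2 m Hl)]; auto. }
  assert (Hu : forall w, (exists k, D k w) <-> (exists h, fin_supp h /\ E h w)).
  { intro w; split. intros [k [Hk _]]. exists (conf k); split; auto. apply fin_cfg.
    intros [h [Hf Hh]]. destruct (least_ex (fun k => conf k = h)) as [k [Hk Hl]]. apply conf_surj; auto.
    exists k. split. congruence. intros j Hj Hc. apply (Hl j Hj). congruence. }
  pose proof (P_sigma Z D HD HDd) as Hs. rewrite (P_ext Z _ _ Hu) in Hs.
  set (U := P (fun w => exists h, fin_supp h /\ E h w)) in *.
  assert (HgE : forall k, g (conf k) = P (E (conf k))).
  { intro k; unfold g; rewrite ind_true. lra. apply fin_cfg. }
  assert (HPD : forall k, P (D k) = if excluded_middle_informative (isfirst k) then g (conf k) else 0).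
  { intro k. destruct excluded_middle_informative as [Hf|Hf].
    rewrite HgE. apply P_ext; intro w; unfold D; tauto.
    rewrite <- (P_empty Z). apply P_ext; intro w; unfold D; tauto. }
  assert (Hpart : forall N, sum_f_R0 (fun k => P (D k)) N = lsum g (Lf N)).
  { induction N; simpl.
    - rewrite HPD. destruct excluded_middle_informative as [Hf|Hf]. lra. exfalso; apply Hf; intros j Hj; lia.
    - rewrite IHN, HPD. destruct excluded_middle_informative; simpl; lra. }
  assert (Hgrow : Un_growing (fun N => sum_f_R0 (fun k => P (D k)) N)).
  { intro N; simpl. pose proof (P_nonneg Z (D (S N)) (HD _)). lra. }
  assert (Hb : forall L, NoDup L -> lsum g L <= U).
  { intros L HL. rewrite (lsum_split g fin_supp L).
    rewrite (lsum_zero g (cfilter (fun t => ~ fin_supp t) L)).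
    2:{ intros t Ht; rewrite cfilter_In in Ht. unfold g; rewrite ind_false; [lra|tauto]. }
    destruct (list_bound (cfilter fin_supp L) (fun k h => isfirst k /\ conf k = h)) as [N HN].
    { intros t Ht. rewrite cfilter_In in Ht. destruct (least_ex (fun k => conf k = t)) as [k [Hk Hl]].
      apply conf_surj; tauto. exists k; split; auto. intros j Hj Hc. apply (Hl j Hj). congruence. }
    apply (Rle_trans _ (lsum g (Lf N))). rewrite Rplus_0_r. apply lsum_incl; auto.
    apply cfilter_NoDup; auto. intros t Ht. apply Lf_In. destruct (HN t Ht) as [k [Hk [H1 H2]]]; eauto.
    rewrite <- Hpart. apply growing_ineq; auto. }
  assert (Hsg : summable g) by (eapply summable_intro; eauto).
  split; auto. apply Rle_antisym.
  - apply (cv_le_bound _ _ _ Hs). intro N; rewrite Hpart. apply sumR_ub; auto. apply Lf_NoDup.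
  - apply sumR_least; auto.
Qed.

End Count.


Section FC.
Context {X : Type} (mu : X -> (X -> nat) -> R) (Hmu : is_BRW mu).
Context (e : nat -> X) (He : forall y, exists n, e n = y).

Definition vanish (B : X -> Prop) (h : X -> nat) := forall y, B y -> h y = 0%nat.

Fixpoint Phi (Bs : nat -> X -> Prop) (M : nat) (tau : X -> R) : X -> R :=
  match M with O => tau | S M' => G mu (mask (Bs 1%nat) (Phi (fun j => Bs (S j)) M' tau)) end.

Lemma Phi_unit Bs M tau : unit01 tau -> unit01 (Phi Bs M tau).
Proof. revert Bs; induction M; intros Bs Ht; simpl; auto. apply G_unit; auto. apply mask_unit; auto. Qed.

Lemma Phi_mono Bs M tau tau' : unit01 tau -> unit01 tau' -> (forall y, tau y <= tau' y) ->
  forall y, Phi Bs M tau y <= Phi Bs M tau' y.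
Proof. revert Bs; induction M; intros Bs H1 H2 H3; simpl; auto.
  apply G_mono; auto. apply mask_unit, Phi_unit; auto. apply mask_unit, Phi_unit; auto.
  intro y. apply mask_mono. intro z. split. apply Phi_unit; auto. apply IHM; auto. Qed.

Definition upd (hs : nat -> X -> nat) m h k := if Nat.eq_dec k m then h else hs k.

Section R.
Context {x0 : X} (Z : BRW_realization mu x0).
Notation Om := (rOm Z).
Notation Fm := (rF Z).
Notation P := (rP Z).
Notation eta := (reta Z).

Definition cyl n Bs M (w : Om) := forall j, (1 <= j <= M)%nat -> vanish (Bs j) (eta (n + j)%nat w).

Lemma meas_vanish B n : Fm (fun w => vanish B (eta n w)).
Proof. apply (meas_allX Z e He); intro y. apply meas_imp. apply meas_const. apply meas_eta. Qed.

Lemma meas_cyl n Bs M : Fm (cyl n Bs M).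
Proof. apply meas_alln; intro j. apply meas_imp. apply meas_const. apply meas_vanish. Qed.

Lemma hist_upd n hs h w : hist Z (S n) (upd hs (S n) h) w <-> (forall k, (k <= n)%nat -> eta k w = hs k) /\ eta (S n) w = h.
Proof. unfold hist, upd. split.
  - intro H. split. intros k Hk. specialize (H k ltac:(lia)). destruct Nat.eq_dec; [lia|auto].
    specialize (H (S n) ltac:(lia)). destruct Nat.eq_dec; [auto|lia].
  - intros [H1 H2] k Hk. destruct Nat.eq_dec. subst; auto. apply H1; lia. Qed.

Lemma markov_step n hs l h : cfg l = hs n ->
  P (hist Z (S n) (upd hs (S n) h)) = P (hist Z n hs) * offl mu l h.
Proof. intro Hl. rewrite (P_ext Z _ _ (hist_upd n hs h)). apply eta_markov; auto. Qed.

Lemma hist_fin n hs l : cfg l = hs n ->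
  P (fun w => hist Z n hs w /\ ~ fin_supp (eta (S n) w)) = 0.
Proof. intro Hl.
  assert (Hh := meas_hist Z e He n hs). assert (Hf := meas_fin Z e He (S n)).
  pose proof (P_split Z (hist Z n hs) _ Hh Hf) as Hs.
  destruct (P_countable Z e He (fun h w => hist Z n hs w /\ eta (S n) w = h)) as [_ Hc].
  - intro h; apply meas_and; auto. apply (meas_eta_fun Z e He).
  - intros h h' w [_ H1] [_ H2]; congruence.
  - rewrite (P_ext Z (fun w => exists h, fin_supp h /\ hist Z n hs w /\ eta (S n) w = h)
              (fun w => hist Z n hs w /\ fin_supp (eta (S n) w))) in Hc.
    2:{ intro w; split. intros [h [H1 [H2 <-]]]; auto. intros [H1 H2]; eauto. }
    assert (E : (fun h => ind (fin_supp h) * P (fun w => hist Z n hs w /\ eta (S n) w = h))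
                = (fun h => P (hist Z n hs) * offl mu l h)).
    { apply functional_extensionality; intro h.
      rewrite (P_ext Z _ (hist Z (S n) (upd hs (S n) h))).
      2:{ intro w; rewrite hist_upd; unfold hist; tauto. }
      rewrite (markov_step n hs l h Hl). destruct (classic (fin_supp h)) as [Hfh|Hfh].
      rewrite ind_true; auto; lra. rewrite ind_false; auto.
      destruct (Req_dec (offl mu l h) 0) as [E0|E0]. rewrite E0; lra. exfalso; apply Hfh; apply (offl_fin mu Hmu l h E0). }
    rewrite E, sumR_scal, (proj2 (offl_mass mu Hmu l)) in Hc.
    lra. apply P_nonneg; auto. apply offl_nonneg; auto.
Qed.

Lemma FC (T : nat -> Om -> Prop) (tau : X -> R) (HT : forall n, Fm (T n)) (Htau : unit01 tau)
  (Hbase : forall n hs l, cfg l = hs n -> P (fun w => hist Z n hs w /\ T n w) = P (hist Z n hs) * lprod tau l) :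
  forall M Bs n hs l, cfg l = hs n ->
  P (fun w => hist Z n hs w /\ cyl n Bs M w /\ T (n + M)%nat w) = P (hist Z n hs) * lprod (Phi Bs M tau) l.
Proof.
  induction M as [|M IH]; intros Bs n hs l Hl.
  - simpl. rewrite <- Hbase; auto. apply P_ext; intro w. rewrite Nat.add_0_r. unfold cyl. split; [tauto|].
    intros [H1 H2]; repeat split; auto. intros; lia.
  - set (E := fun w => hist Z n hs w /\ cyl n Bs (S M) w /\ T (n + S M)%nat w).
    set (Eh := fun h w => hist Z (S n) (upd hs (S n) h) w /\ vanish (Bs 1%nat) h /\
                 cyl (S n) (fun j => Bs (S j)) M w /\ T (S n + M)%nat w).
    assert (HE : Fm E) by (apply meas_and; [apply (meas_hist Z e He)| apply meas_and; [apply meas_cyl|auto]]).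
    assert (HEh : forall h, Fm (Eh h)).
    { intro h; apply meas_and; [apply (meas_hist Z e He)|]. apply meas_and; [apply meas_const|].
      apply meas_and; [apply meas_cyl|auto]. }
    assert (Hf := meas_fin Z e He (S n)).
    change (P (fun w => hist Z n hs w /\ cyl n Bs (S M) w /\ T (n + S M)%nat w)) with (P E).
    rewrite (P_split Z E _ HE Hf).
    assert (Hnull : P (fun w => E w /\ ~ fin_supp (eta (S n) w)) = 0).
    { apply Rle_antisym; [|apply P_nonneg; apply meas_and; auto; apply meas_not; auto].
      rewrite <- (hist_fin n hs l Hl). apply P_mono.
      apply meas_and; auto; apply meas_not; auto. apply meas_and. apply (meas_hist Z e He). apply meas_not; auto.
      intros w [[H1 _] H2]; auto. }
    rewrite Hnull, Rplus_0_r.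
    destruct (P_countable Z e He Eh HEh) as [_ Hc].
    { intros h h' w [H1 _] [H2 _]. apply hist_upd in H1; apply hist_upd in H2. destruct H1, H2; congruence. }
    rewrite (P_ext Z (fun w => exists h, fin_supp h /\ Eh h w) (fun w => E w /\ fin_supp (eta (S n) w))) in Hc.
    2:{ intro w; split.
        - intros [h [Hfh [H1 [H2 [H3 H4]]]]]. apply hist_upd in H1. destruct H1 as [H1 H1'].
          subst h. split; auto. split; [exact H1|]. split.
          + intros j Hj. destruct (Nat.eq_dec j 1). subst j. rewrite Nat.add_1_r; auto.
            destruct j as [|j]; [lia|]. specialize (H3 j ltac:(lia)). replace (n + S j)%nat with (S n + j)%nat by lia; auto.
          + replace (n + S M)%nat with (S n + M)%nat by lia; auto.
        - intros [[H1 [H2 H3]] H4]. exists (eta (S n) w). split; auto. split; [apply hist_upd; auto|].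
          split; [|split].
          + specialize (H2 1%nat ltac:(lia)). rewrite Nat.add_1_r in H2; auto.
          + intros j Hj. specialize (H2 (S j) ltac:(lia)). replace (S n + j)%nat with (n + S j)%nat by lia; auto.
          + replace (S n + M)%nat with (n + S M)%nat by lia; auto. }
    rewrite Hc.
    set (u := Phi (fun j => Bs (S j)) M tau).
    assert (Hu : unit01 u) by (apply Phi_unit; auto).
    assert (Epw : (fun h => ind (fin_supp h) * P (Eh h)) = (fun h => P (hist Z n hs) * (offl mu l h * W (mask (Bs 1%nat) u) h))).
    { apply functional_extensionality; intro h. destruct (classic (fin_supp h)) as [Hfh|Hfh].
      - rewrite ind_true, W_mask by auto.
        destruct (classic (vanish (Bs 1%nat) h)) as [Hv|Hv].
        + rewrite (ind_true (forall y, Bs 1%nat y -> h y = 0%nat)) by auto.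
          rewrite (P_ext Z (Eh h) (fun w => hist Z (S n) (upd hs (S n) h) w /\ cyl (S n) (fun j => Bs (S j)) M w /\ T (S n + M)%nat w)).
          2:{ intro w; unfold Eh; tauto. }
          rewrite IH with (l := listof h). rewrite markov_step with (l := l); auto. unfold W, u. lra.
          unfold upd. destruct Nat.eq_dec; [|lia]. apply cfg_listof; auto.
        + rewrite (ind_false (forall y, Bs 1%nat y -> h y = 0%nat)) by auto.
          rewrite (P_ext Z (Eh h) (fun _ => False)), P_empty. lra. intro w; unfold Eh; tauto.
      - rewrite ind_false by auto. destruct (Req_dec (offl mu l h) 0) as [E0|E0]. rewrite E0; lra.
        exfalso; apply Hfh; apply (offl_fin mu Hmu l h E0). }
    rewrite Epw, sumR_scal. simpl. f_equal. apply (proj2 (proj2 (offl_GF mu Hmu l)) (mask (Bs 1%nat) u)).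
    apply mask_unit; auto.
    apply P_nonneg; apply (meas_hist Z e He).
    intro h. pose proof (offl_nonneg mu Hmu l h). pose proof (W_bounds (mask (Bs 1%nat) u) h (mask_unit _ _ Hu)). nra.
Qed.

End R.
End FC.


Lemma lprod_cv {X} (f : nat -> X -> R) (g : X -> R) l :
  (forall y, Un_cv (fun M => f M y) (g y)) -> Un_cv (fun M => lprod (f M) l) (lprod g l).
Proof. intro H. induction l; simpl.
  - intros eps Heps; exists O; intros; rewrite R_dist_eq; auto.
  - apply CV_mult; auto. Qed.

Lemma lim_prod {X} (a : nat -> R) A b (f : nat -> X -> R) g l :
  (forall M, a M = b * lprod (f M) l) -> Un_cv a A -> (forall y, Un_cv (fun M => f M y) (g y)) ->
  A = b * lprod g l.
Proof. intros Ha HA Hf. apply (UL_sequence a); auto.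
  eapply Un_cv_ext. intro M; symmetry; apply Ha.
  apply CV_mult. intros eps Heps; exists O; intros; rewrite R_dist_eq; auto. apply lprod_cv; auto. Qed.

Section App.
Context {X : Type} (mu : X -> (X -> nat) -> R) (Hmu : is_BRW mu).
Context (e : nat -> X) (He : forall y, exists n, e n = y).
Context (Z : forall x : X, BRW_realization mu x).

Definition hs0 (x : X) : nat -> X -> nat := fun _ => cfg (x :: nil).

Section One.
Context (x0 : X).
Notation Zx := (Z x0).
Notation Om := (rOm Zx).
Notation Fm := (rF Zx).
Notation P := (rP Zx).
Notation eta := (reta Zx).

Lemma P_hist0 : P (hist Zx 0 (hs0 x0)) = 1.
Proof. rewrite <- (eta_init Zx). apply P_ext. intro w; unfold hist, hs0; split.
  intro H; apply H; lia. intros H k Hk; replace k with O by lia; auto. Qed.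

Lemma P_hist0_and E : Fm E -> P (fun w => hist Zx 0 (hs0 x0) w /\ E w) = P E.
Proof. intro HE. assert (Hh := meas_hist Zx e He 0 (hs0 x0)).
  rewrite (P_split Zx E (hist Zx 0 (hs0 x0)) HE Hh).
  assert (P (fun w => E w /\ ~ hist Zx 0 (hs0 x0) w) = 0).
  { apply Rle_antisym; [|apply P_nonneg; apply meas_and; auto; apply meas_not; auto].
    pose proof (P_compl Zx _ Hh). rewrite P_hist0 in H.
    apply (Rle_trans _ (P (fun w => ~ hist Zx 0 (hs0 x0) w))); [|lra].
    apply P_mono. apply meas_and; auto; apply meas_not; auto. apply meas_not; auto. tauto. }
  rewrite H. rewrite Rplus_0_r. apply P_ext; intro; tauto. Qed.

Lemma FC_true : forall M Bs n hs l, cfg l = hs n ->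
  P (fun w => hist Zx n hs w /\ cyl mu Zx n Bs M w) = P (hist Zx n hs) * lprod (Phi mu Bs M (fun _ => 1)) l.
Proof. intros M Bs n hs l Hl. rewrite <- (FC mu Hmu e He Zx (fun _ _ => True) (fun _ => 1)); auto.
  apply P_ext; intro; tauto. intro; apply meas_True. intro; lra.
  intros; rewrite lprod_one, Rmult_1_r. apply P_ext; intro; tauto. Qed.

Lemma cyl_single Bs M : P (cyl mu Zx 0 Bs M) = Phi mu Bs M (fun _ => 1) x0.
Proof. rewrite <- P_hist0_and by (apply (meas_cyl mu e He)). rewrite FC_true with (l := x0 :: nil); auto.
  rewrite P_hist0; simpl; lra. Qed.

End One.

Definition TA (A : X -> Prop) {x0} (Zx : BRW_realization mu x0) n (w : rOm Zx) :=
  forall k y, (n < k)%nat -> A y -> reta Zx k w y = 0%nat.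

Lemma meas_TA A {x0} (Zx : BRW_realization mu x0) n : rF Zx (TA A Zx n).
Proof. apply meas_alln; intro k. apply (meas_allX Zx e He); intro y. apply meas_imp. apply meas_const.
  apply meas_imp. apply meas_const. apply meas_eta. Qed.

Lemma TA_cyl A {x0} (Zx : BRW_realization mu x0) n w : TA A Zx n w <-> forall M, cyl mu Zx n (fun _ => A) M w.
Proof. unfold TA, cyl, vanish. split.
  - intros H M j Hj y Hy. apply H; auto; lia.
  - intros H k y Hk Hy. specialize (H k (k - n)%nat ltac:(lia) y Hy). replace (n + (k - n))%nat with k in H by lia; auto. Qed.

Lemma cyl_dec {x0} (Zx : BRW_realization mu x0) n Bs M w : cyl mu Zx n Bs (S M) w -> cyl mu Zx n Bs M w.
Proof. intros H j Hj; apply H; lia. Qed.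

Definition q0f A (y : X) := rP (Z y) (TA A (Z y) 0).

Lemma unit_P {x0} (Zx : BRW_realization mu x0) E : rF Zx E -> 0 <= rP Zx E <= 1.
Proof. intro; split; [apply P_nonneg|apply P_le1]; auto. Qed.

Lemma q0f_unit A : unit01 (q0f A).
Proof. intro y; apply unit_P, meas_TA. Qed.

Lemma base_TA A x0 : forall n hs l, cfg l = hs n ->
  rP (Z x0) (fun w => hist (Z x0) n hs w /\ TA A (Z x0) n w) = rP (Z x0) (hist (Z x0) n hs) * lprod (q0f A) l.
Proof. intros n hs l Hl.
  apply (lim_prod (fun M => rP (Z x0) (fun w => hist (Z x0) n hs w /\ cyl mu (Z x0) n (fun _ => A) M w)) _ _
          (fun M => Phi mu (fun _ => A) M (fun _ => 1))).
  - intro M; apply FC_true; auto.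
  - rewrite (P_ext _ _ (fun w => forall M, hist (Z x0) n hs w /\ cyl mu (Z x0) n (fun _ => A) M w)).
    apply P_dec. intro M; apply meas_and; [apply (meas_hist _ e He)|apply (meas_cyl mu e He)].
    intros M w [H1 H2]; split; auto; apply cyl_dec; auto.
    intro w; rewrite TA_cyl. split. intros [H1 H2] M; auto. intro H; split. apply (H O). intro M; apply H.
  - intro y. unfold q0f. eapply Un_cv_ext. intro M; apply cyl_single.
    rewrite (P_ext _ _ (fun w => forall M, cyl mu (Z y) 0 (fun _ => A) M w)).
    apply P_dec. intro; apply (meas_cyl mu e He). intros M w; apply cyl_dec.
    intro w; apply TA_cyl.
Qed.

Definition qbf (y : X) := rP (Z y) (loc_ext (Z y) (fun _ => True)).

Lemma meas_locext A {x0} (Zx : BRW_realization mu x0) : rF Zx (loc_ext Zx A).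
Proof. apply meas_exn; intro n. apply (meas_TA A Zx n). Qed.

Lemma qbf_unit : unit01 qbf.
Proof. intro y; apply unit_P, meas_locext. Qed.

Definition BsE (m : nat) : nat -> X -> Prop := fun j _ => (m < j)%nat.

Lemma TE_cyl {x0} (Zx : BRW_realization mu x0) n m w :
  TA (fun _ => True) Zx (n + m) w <-> forall M, cyl mu Zx n (BsE m) M w.
Proof. unfold TA, cyl, vanish, BsE. split.
  - intros H M j Hj y Hy. apply H; auto; lia.
  - intros H k y Hk _. specialize (H (k - n)%nat (k - n)%nat ltac:(lia) y ltac:(lia)).
    replace (n + (k - n))%nat with k in H by lia; auto. Qed.

Lemma base_TE x0 : forall n hs l, cfg l = hs n ->
  rP (Z x0) (fun w => hist (Z x0) n hs w /\ loc_ext (Z x0) (fun _ => True) w) = rP (Z x0) (hist (Z x0) n hs) * lprod qbf l.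
Proof. intros n hs l Hl.
  assert (Hm : forall m, rP (Z x0) (fun w => hist (Z x0) n hs w /\ TA (fun _ => True) (Z x0) (n + m) w) =
     rP (Z x0) (hist (Z x0) n hs) * lprod (fun y => rP (Z y) (TA (fun _ => True) (Z y) m)) l).
  { intro m.
    apply (lim_prod (fun M => rP (Z x0) (fun w => hist (Z x0) n hs w /\ cyl mu (Z x0) n (BsE m) M w)) _ _
          (fun M => Phi mu (BsE m) M (fun _ => 1))).
    - intro M; apply FC_true; auto.
    - rewrite (P_ext _ _ (fun w => forall M, hist (Z x0) n hs w /\ cyl mu (Z x0) n (BsE m) M w)).
      apply P_dec. intro M; apply meas_and; [apply (meas_hist _ e He)|apply (meas_cyl mu e He)].
      intros M w [H1 H2]; split; auto; apply cyl_dec; auto.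
      intro w; rewrite TE_cyl. split. intros [H1 H2] M; auto. intro H; split. apply (H O). intro M; apply H.
    - intro y. eapply Un_cv_ext. intro M; apply cyl_single.
      rewrite (P_ext _ _ (fun w => forall M, cyl mu (Z y) 0 (BsE m) M w)).
      apply P_dec. intro; apply (meas_cyl mu e He). intros M w; apply cyl_dec.
      intro w; rewrite <- TE_cyl; reflexivity. }
  assert (Hmono : forall x1 (Zx : BRW_realization mu x1) t t' w, (t <= t')%nat -> TA (fun _ => True) Zx t w -> TA (fun _ => True) Zx t' w).
  { intros x1 Zx t t' w Ht H k y Hk Hy; apply H; auto; lia. }
  apply (lim_prod _ _ _ (fun m y => rP (Z y) (TA (fun _ => True) (Z y) m)) _ l Hm).
  - rewrite (P_ext _ _ (fun w => exists m, hist (Z x0) n hs w /\ TA (fun _ => True) (Z x0) (n + m) w)).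
    apply P_inc. intro m; apply meas_and; [apply (meas_hist _ e He)|apply meas_TA].
    intros m w [H1 H2]; split; auto. apply (Hmono _ (Z x0) (n + m)%nat); auto; lia.
    intro w; split. intros [H1 [t Ht]]. exists t; split; auto. apply (Hmono _ (Z x0) t); auto; lia.
    intros [m [H1 H2]]. split; auto. exists (n + m)%nat; auto.
  - intro y. unfold qbf. apply P_inc. intro; apply meas_TA.
    intros m w H; apply (Hmono _ (Z y) m); auto.
Qed.
End App.


Section Main.
Context {X : Type} (mu : X -> (X -> nat) -> R) (Hmu : is_BRW mu).
Context (e : nat -> X) (He : forall y, exists n, e n = y).
Context (Z : forall x : X, BRW_realization mu x).

Definition noB : nat -> X -> Prop := fun _ _ => False.

Lemma tail_formula x (T : nat -> rOm (Z x) -> Prop) tau (HT : forall n, rF (Z x) (T n)) (Htau : unit01 tau)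
  (Hbase : forall n hs l, cfg l = hs n -> rP (Z x) (fun w => hist (Z x) n hs w /\ T n w) = rP (Z x) (hist (Z x) n hs) * lprod tau l) :
  forall n, rP (Z x) (T n) = Phi mu noB n tau x.
Proof. intro n.
  pose proof (FC mu Hmu e He (Z x) T tau HT Htau Hbase n noB 0 (hs0 x) (x :: nil) eq_refl) as H.
  rewrite (P_hist0 mu Z x) in H. simpl in H. rewrite Rmult_1_r, Rmult_1_l in H. rewrite <- H.
  rewrite <- (P_hist0_and mu e He Z x) by auto. apply P_ext. intro w. unfold cyl, vanish, noB. split.
  intros [H1 H2]; repeat split; auto; tauto. tauto. Qed.

Lemma main_ineq A : (forall y, qn (Z y) A 0 <= qbar (Z y)) -> forall x, q (Z x) A <= qbar (Z x).
Proof. intros H2 x.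
  assert (HA : forall n, rP (Z x) (TA mu A (Z x) n) = Phi mu noB n (q0f mu Z A) x).
  { apply tail_formula. intro; apply (meas_TA mu e He). apply (q0f_unit mu e He). apply (base_TA mu Hmu e He). }
  assert (HE : forall n, rP (Z x) (loc_ext (Z x) (fun _ => True)) = Phi mu noB n (qbf mu Z) x).
  { apply (tail_formula x (fun _ => loc_ext (Z x) (fun _ => True))). intro; apply (meas_locext mu e He).
    apply (qbf_unit mu e He). apply (base_TE mu Hmu e He). }
  assert (Hle : forall n, rP (Z x) (TA mu A (Z x) n) <= qbar (Z x)).
  { intro n. rewrite HA. unfold qbar, q. rewrite (HE n). apply Phi_mono; auto.
    apply (q0f_unit mu e He). apply (qbf_unit mu e He). }
  unfold q. apply (cv_le_bound (fun n => rP (Z x) (TA mu A (Z x) n))); auto.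
  apply P_inc. intro; apply (meas_TA mu e He). intros n w H k y Hk Hy; apply H; auto; lia.
Qed.

Lemma Phi_all Bs tau tau2 n : (forall y, Bs (S n) y) -> forall M, Phi mu Bs (S n + M) tau = Phi mu Bs (S n) tau2.
Proof. revert Bs; induction n; intros Bs Hall M.
  - simpl. f_equal. apply functional_extensionality; intro y. unfold mask.
    destruct (excluded_middle_informative (Bs 1%nat y)) as [_|Hn]; [reflexivity| exfalso; apply Hn, Hall].
  - change (Phi mu Bs (S (S n) + M) tau) with (G mu (mask (Bs 1%nat) (Phi mu (fun j => Bs (S j)) (S n + M) tau))).
    change (Phi mu Bs (S (S n)) tau2) with (G mu (mask (Bs 1%nat) (Phi mu (fun j => Bs (S j)) (S n) tau2))).
    rewrite IHn; auto. Qed.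

Lemma glob_null x : rP (Z x) (fun w => ~ loc_ext (Z x) (fun _ => True) w /\ ~ glob_surv (Z x) w) = 0.
Proof.
  set (D := fun n w => (forall y, reta (Z x) n w y = 0%nat) /\ ~ loc_ext (Z x) (fun _ => True) w).
  assert (HD : forall n, rF (Z x) (D n)).
  { intro n; apply meas_and. apply (meas_allX _ e He); intro; apply meas_eta. apply meas_not, (meas_locext mu e He). }
  rewrite (P_ext _ _ (fun w => exists n, D n w)).
  2:{ intro w; unfold D, glob_surv; split.
      - intros [H1 H2]. apply not_all_ex_not in H2. destruct H2 as [n Hn]. exists n; split; auto.
        intro y; apply NNPP; intro; apply Hn; eauto.
      - intros [n [H1 H2]]. split; auto. intro Hs; destruct (Hs n) as [y Hy]; auto. }
  apply P_null_union; auto. intros [|n].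
  - apply Rle_antisym; [|apply P_nonneg; auto].
    assert (Hh := meas_hist (Z x) e He 0 (hs0 x)).
    pose proof (P_compl _ _ Hh) as Hc. rewrite (P_hist0 mu Z x) in Hc.
    apply (Rle_trans _ (rP (Z x) (fun w => ~ hist (Z x) 0 (hs0 x) w))); [|lra].
    apply P_mono; auto. apply meas_not; auto. intros w [H1 _] H3. specialize (H3 O (le_n _)).
    specialize (H1 x). rewrite H3 in H1. unfold hs0 in H1; simpl in H1.
    destruct excluded_middle_informative; [lia|auto].
  - set (Bs := fun j (_ : X) => (S n <= j)%nat).
    assert (Hcyl : forall M, rP (Z x) (cyl mu (Z x) 0 Bs (S n + M)) = rP (Z x) (cyl mu (Z x) 0 Bs (S n))).
    { intro M. rewrite !(cyl_single mu Hmu e He Z x). rewrite (Phi_all Bs (fun _ => 1) (fun _ => 1) n); auto. intro; unfold Bs; lia. }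
    assert (Hlim : rP (Z x) (fun w => forall M, cyl mu (Z x) 0 Bs (S n + M) w) = rP (Z x) (cyl mu (Z x) 0 Bs (S n))).
    { symmetry. apply (UL_sequence (fun M => rP (Z x) (cyl mu (Z x) 0 Bs (S n + M)))).
      intros eps Heps; exists O; intros; rewrite Hcyl, R_dist_eq; auto.
      apply P_dec. intro; apply (meas_cyl mu e He). intros M w Hw j Hj; apply Hw; lia. }
    apply Rle_antisym; [|apply P_nonneg; auto].
    assert (Hc1 := meas_cyl mu e He (Z x) 0 Bs (S n)).
    assert (Hc2 : rF (Z x) (fun w => forall M, cyl mu (Z x) 0 Bs (S n + M) w)) by (apply meas_alln; intro; apply (meas_cyl mu e He)).
    rewrite (P_split _ _ _ Hc1 Hc2) in Hlim.
    rewrite (P_ext _ (fun w => cyl mu (Z x) 0 Bs (S n) w /\ (forall M, cyl mu (Z x) 0 Bs (S n + M) w))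
       (fun w => forall M, cyl mu (Z x) 0 Bs (S n + M) w)) in Hlim.
    2:{ intro w; split; [tauto|]. intro H; split; auto. rewrite <- (Nat.add_0_r (S n)). apply H. }
    apply (Rle_trans _ (rP (Z x) (fun w => cyl mu (Z x) 0 Bs (S n) w /\ ~ (forall M, cyl mu (Z x) 0 Bs (S n + M) w)))); [|lra].
    apply P_mono; auto. apply meas_and; auto; apply meas_not; auto.
    intros w [H1 H2]. split.
    + intros j Hj y Hy. unfold Bs in Hy. replace j with (S n) by lia. apply H1.
    + intro H. apply H2. exists n. intros k y Hk _. specialize (H (k - S n)%nat k ltac:(lia) y).
      unfold Bs in H. simpl in H. apply H. lia.
Qed.

End Main.


Theorem mainTheorem15 (X : Type)
  (HX : exists e : nat -> X, forall y, exists n, e n = y)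
  (mu : X -> (X -> nat) -> R) (Hmu : is_BRW mu)
  (Z : forall x : X, BRW_realization mu x)
  (A : X -> Prop) (HA : exists a, A a) :
  ((forall x, q (Z x) A = qbar (Z x)) <-> (forall x, qn (Z x) A 0 <= qbar (Z x)))
  /\
  ((forall x, q (Z x) A = qbar (Z x)) <->
   (forall x, qbar (Z x) = 1 \/
      cond_prob (Z x) (fun w => ~ loc_ext (Z x) A w) (glob_surv (Z x)) = 1)).
Proof.
  destruct HX as [e He].
  assert (mE : forall x, rF (Z x) (loc_ext (Z x) A)) by (intro x; apply (meas_locext mu e He)).
  assert (mG : forall x, rF (Z x) (loc_ext (Z x) (fun _ => True))) by (intro x; apply (meas_locext mu e He)).
  assert (mS : forall x, rF (Z x) (glob_surv (Z x))).
  { intro x. apply meas_alln; intro n. apply (meas_exX _ e He); intro y. apply meas_not, meas_eta. }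
  assert (GE : forall x w, loc_ext (Z x) (fun _ => True) w -> loc_ext (Z x) A w).
  { intros x w [n Hn]; exists n; intros k y Hk _; apply Hn; auto. }
  assert (qge : forall x, qbar (Z x) <= q (Z x) A).
  { intro x; unfold qbar, q; apply P_mono; auto. }
  assert (qnle : forall x, qn (Z x) A 0 <= q (Z x) A).
  { intro x; unfold qn, q. apply P_mono; auto. apply (meas_TA mu e He A (Z x) 0).
    intros w Hw; exists O; auto. }
  assert (SG : forall x w, glob_surv (Z x) w -> ~ loc_ext (Z x) (fun _ => True) w).
  { intros x w Hs [n Hn]. destruct (Hs (S n)) as [y Hy]. apply Hy, Hn; auto. }
  assert (null := glob_null mu Hmu e He Z).
  split; split.
  - intros H x. rewrite <- H. apply qnle.
  - intros H x. apply Rle_antisym; [|apply qge]. apply (main_ineq mu Hmu e He Z A H).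
  - intros H x. destruct (Req_dec (qbar (Z x)) 1) as [H1|H1]; [left; auto|right].
    
    assert (HES : rP (Z x) (fun w => loc_ext (Z x) A w /\ glob_surv (Z x) w) = 0).
    { apply Rle_antisym; [|apply P_nonneg; apply meas_and; auto].
      assert (Hs := P_split (Z x) (loc_ext (Z x) A) (loc_ext (Z x) (fun _ => True)) (mE x) (mG x)).
      rewrite (P_ext _ (fun w => loc_ext (Z x) A w /\ loc_ext (Z x) (fun _ => True) w) (loc_ext (Z x) (fun _ => True))) in Hs.
      2:{ intro w; split; [tauto|]. intro; split; auto. }
      pose proof (H x) as Hx. unfold qbar, q in Hx. 
      apply (Rle_trans _ (rP (Z x) (fun w => loc_ext (Z x) A w /\ ~ loc_ext (Z x) (fun _ => True) w))); [|lra].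
      apply P_mono. apply meas_and; auto. apply meas_and; auto. apply meas_not; auto.
      intros w [H2 H3]; split; auto. }
    assert (HS : 0 < rP (Z x) (glob_surv (Z x))).
    { assert (Hs := P_split (Z x) (fun w => ~ loc_ext (Z x) (fun _ => True) w) (glob_surv (Z x)) (meas_not _ _ (mG x)) (mS x)).
      rewrite P_compl in Hs; auto.  pose proof (null x) as Hn. 
      assert (rP (Z x) (fun w => ~ loc_ext (Z x) (fun _ => True) w /\ glob_surv (Z x) w) <= rP (Z x) (glob_surv (Z x))).
      { apply P_mono; auto. apply meas_and; auto. apply meas_not; auto. tauto. }
      assert (qbar (Z x) <= 1) by (apply P_le1; auto). unfold qbar, q in *.  lra. }
    unfold cond_prob. 
    assert (Hs := P_split (Z x) (glob_surv (Z x)) (loc_ext (Z x) A) (mS x) (mE x)). 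
    rewrite (P_ext _ (fun w => glob_surv (Z x) w /\ loc_ext (Z x) A w) (fun w => loc_ext (Z x) A w /\ glob_surv (Z x) w)) in Hs by (intro; tauto).
    rewrite (P_ext _ (fun w => glob_surv (Z x) w /\ ~ loc_ext (Z x) A w) (fun w => ~ loc_ext (Z x) A w /\ glob_surv (Z x) w)) in Hs by (intro; tauto).
     rewrite HES, Rplus_0_l in Hs. rewrite <- Hs. field. lra.
  - intros H x. apply Rle_antisym; [|apply qge]. 
    destruct (H x) as [H1|H1].
    + rewrite H1. apply P_le1; auto.
    + unfold cond_prob in H1. 
      assert (HS : rP (Z x) (glob_surv (Z x)) <> 0).
      { intro H0. unfold Rdiv in H1. rewrite H0, Rinv_0 in H1. lra. }
      assert (Heq : rP (Z x) (fun w => ~ loc_ext (Z x) A w /\ glob_surv (Z x) w) = rP (Z x) (glob_surv (Z x))).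
      { unfold Rdiv in H1. apply (Rmult_eq_reg_r (/ rP (Z x) (glob_surv (Z x)))). rewrite H1, Rinv_r; auto.
        apply Rinv_neq_0_compat; auto. }
      assert (Hs := P_split (Z x) (glob_surv (Z x)) (loc_ext (Z x) A) (mS x) (mE x)). 
      rewrite (P_ext _ (fun w => glob_surv (Z x) w /\ ~ loc_ext (Z x) A w) (fun w => ~ loc_ext (Z x) A w /\ glob_surv (Z x) w)) in Hs by (intro; tauto).
      
      assert (HES : rP (Z x) (fun w => glob_surv (Z x) w /\ loc_ext (Z x) A w) = 0) by lra.
      unfold q. 
      assert (Hs2 := P_split (Z x) (loc_ext (Z x) A) (glob_surv (Z x)) (mE x) (mS x)). 
      rewrite (P_ext _ (fun w => loc_ext (Z x) A w /\ glob_surv (Z x) w) (fun w => glob_surv (Z x) w /\ loc_ext (Z x) A w)) in Hs2 by (intro; tauto).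
       rewrite HES, Rplus_0_l in Hs2. rewrite Hs2.
      pose proof (null x) as Hn. 
      assert (rP (Z x) (fun w => loc_ext (Z x) A w /\ ~ glob_surv (Z x) w) <=
              rP (Z x) (fun w => loc_ext (Z x) (fun _ => True) w \/ (~ loc_ext (Z x) (fun _ => True) w /\ ~ glob_surv (Z x) w))).
      { apply P_mono. apply meas_and; auto. apply meas_not; auto.
        apply meas_or; auto. apply meas_and; apply meas_not; auto.
        intros w [H2 H3]. destruct (classic (loc_ext (Z x) (fun _ => True) w)); [left|right]; auto. }
      pose proof (P_union_le (Z x) (loc_ext (Z x) (fun _ => True)) (fun w => ~ loc_ext (Z x) (fun _ => True) w /\ ~ glob_surv (Z x) w) (mG x)).
      assert (Hm : rF (Z x) (fun w => ~ loc_ext (Z x) (fun _ => True) w /\ ~ glob_surv (Z x) w)) by (apply meas_and; apply meas_not; auto).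
      specialize (H2 Hm).  unfold qbar, q.  lra.
Qed.
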